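(* The locus of the nine-point center $X_5$ (triangle center function $h=s_2s_3\,[s_1^2(s_2^2+s_3^2)-(s_2^2-s_3^2)^2]$) over the 3-periodics of $E$ is the ellipse $x^2/a_5^2+y^2/b_5^2=1$, where $$a_5=\frac{-w_5'(a,b)+w_5''(a,b)\,\delta}{w_5(a,b)},\qquad b_5=\frac{w_5'(b,a)-w_5''(b,a)\,\delta}{w_5(b,a)},$$ with $w_5'(u,v)=u^2(u^2+3v^2)$, $w_5''(u,v)=3u^2+v^2$, $w_5(u,v)=4u(u^2-v^2)$.
   Context: Fix real numbers $a>b>0$, let $E$ be the ellipse $x^2/a^2+y^2/b^2=1$ and $\delta=\sqrt{a^4-a^2b^2+b^4}$. A 3-periodic is a non-degenerate triangle $P_1P_2P_3$ with all vertices on $E$ such that at each vertex $P_j$ the normal line to $E$ at $P_j$ bisects the interior angle of the triangle at $P_j$. For a triangle let $s_1=|P_2P_3|$, $s_2=|P_3P_1|$, $s_3=|P_1P_2|$. Given a triangle center function $h(s_1,s_2,s_3)$, the center $X_h$ is the point with trilinears $p:q:r=h(s_1,s_2,s_3):h(s_2,s_3,s_1):h(s_3,s_1,s_2)$, i.e. the Cartesian point $\dfrac{p s_1P_1+q s_2P_2+r s_3P_3}{p s_1+q s_2+r s_3}$. The locus of $X_h$ is the set of points $X_h(T)$ over all 3-periodics $T$. *)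

(* Defs.v *)
From Stdlib Require Import Reals Lra.
Open Scope R_scope.

Definition pt := (R * R)%type.

Definition dist (P Q : pt) : R :=
  sqrt ((fst P - fst Q)^2 + (snd P - snd Q)^2).

Definition on_ellipse (a b : R) (P : pt) : Prop :=
  (fst P)^2 / a^2 + (snd P)^2 / b^2 = 1.

Definition cross (u1 u2 v1 v2 : R) : R := u1 * v2 - u2 * v1.

Definition nondegenerate (P1 P2 P3 : pt) : Prop :=
  cross (fst P2 - fst P1) (snd P2 - snd P1) (fst P3 - fst P1) (snd P3 - snd P1) <> 0.

(* The normal line to E at P (direction (x/a^2, y/b^2)) bisects the interior
   angle of triangle P Q S at P, i.e. is parallel to the internal bisector
   direction (Q-P)/|Q-P| + (S-P)/|S-P|. *)
Definition normal_bisects (a b : R) (P Q S : pt) : Prop :=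
  cross (fst P / a^2) (snd P / b^2)
        ((fst Q - fst P) / dist Q P + (fst S - fst P) / dist S P)
        ((snd Q - snd P) / dist Q P + (snd S - snd P) / dist S P) = 0.

Definition periodic3 (a b : R) (P1 P2 P3 : pt) : Prop :=
  nondegenerate P1 P2 P3 /\
  on_ellipse a b P1 /\ on_ellipse a b P2 /\ on_ellipse a b P3 /\
  normal_bisects a b P1 P2 P3 /\
  normal_bisects a b P2 P3 P1 /\
  normal_bisects a b P3 P1 P2.

(* Triangle center X_h from trilinears h(s1,s2,s3):h(s2,s3,s1):h(s3,s1,s2). *)
Definition center (h : R -> R -> R -> R) (P1 P2 P3 : pt) : pt :=
  let s1 := dist P2 P3 in
  let s2 := dist P3 P1 in
  let s3 := dist P1 P2 in
  let p := h s1 s2 s3 in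
  let q := h s2 s3 s1 in
  let r := h s3 s1 s2 in
  let D := p * s1 + q * s2 + r * s3 in
  ((p * s1 * fst P1 + q * s2 * fst P2 + r * s3 * fst P3) / D,
   (p * s1 * snd P1 + q * s2 * snd P2 + r * s3 * snd P3) / D).

Definition h5 (s1 s2 s3 : R) : R :=
  s2 * s3 * (s1^2 * (s2^2 + s3^2) - (s2^2 - s3^2)^2).

Definition delta (a b : R) : R := sqrt (a^4 - a^2 * b^2 + b^4).

Definition w5' (u v : R) : R := u^2 * (u^2 + 3 * v^2).
Definition w5'' (u v : R) : R := 3 * u^2 + v^2.
Definition w5 (u v : R) : R := 4 * u * (u^2 - v^2).

Definition a5 (a b : R) : R := (- w5' a b + w5'' a b * delta a b) / w5 a b.
Definition b5 (a b : R) : R := (w5' b a - w5'' b a * delta a b) / w5 b a.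

Definition locus (a b : R) (h : R -> R -> R -> R) (X : pt) : Prop :=
  exists P1 P2 P3 : pt, periodic3 a b P1 P2 P3 /\ center h P1 P2 P3 = X.

(* Main.v *)
Require Import Defs.
From Stdlib Require Import Reals Lra Psatz.
Open Scope R_scope.

Lemma sq_pos x : x <> 0 -> 0 < x^2.
Proof. intro H. replace (x^2) with (Rsqr x) by (unfold Rsqr; ring). apply Rsqr_pos_lt; auto. Qed.

Lemma sum_sq_pos u v : ~ (u = 0 /\ v = 0) -> 0 < u^2 + v^2.
Proof.
  intro H. destruct (Req_dec u 0) as [hu|hu].
  - assert (hv : v <> 0) by tauto. pose proof (sq_pos v hv). pose proof (pow2_ge_0 u). lra.
  - pose proof (sq_pos u hu). pose proof (pow2_ge_0 v). lra.
Qed.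

Lemma center_eq (x1 y1 x2 y2 x3 y3 Ox Oy : R) :
  (x2-x1)*(y3-y1)-(y2-y1)*(x3-x1) <> 0 ->
  2*(x2-x1)*Ox + 2*(y2-y1)*Oy = x2^2+y2^2-x1^2-y1^2 ->
  2*(x3-x1)*Ox + 2*(y3-y1)*Oy = x3^2+y3^2-x1^2-y1^2 ->
  center h5 (x1,y1) (x2,y2) (x3,y3) = ((x1+x2+x3-Ox)/2, (y1+y2+y3-Oy)/2).
Proof.
  intros HK E1 E2.
  set (K := (x2-x1)*(y3-y1)-(y2-y1)*(x3-x1)) in *.
  assert (H4x : 4*K*Ox = 2*(y3-y1)*(2*(x2-x1)*Ox + 2*(y2-y1)*Oy) - 2*(y2-y1)*(2*(x3-x1)*Ox + 2*(y3-y1)*Oy)) by (unfold K; ring).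
  rewrite E1, E2 in H4x.
  assert (H4y : 4*K*Oy = 2*(x2-x1)*(2*(x3-x1)*Ox + 2*(y3-y1)*Oy) - 2*(x3-x1)*(2*(x2-x1)*Ox + 2*(y2-y1)*Oy)) by (unfold K; ring).
  rewrite E1, E2 in H4y.
  assert (HOx : Ox = (2*(y3-y1)*(x2^2+y2^2-x1^2-y1^2) - 2*(y2-y1)*(x3^2+y3^2-x1^2-y1^2))/(4*K)).
  { rewrite <- H4x. field. exact HK. }
  assert (HOy : Oy = (2*(x2-x1)*(x3^2+y3^2-x1^2-y1^2) - 2*(x3-x1)*(x2^2+y2^2-x1^2-y1^2))/(4*K)).
  { rewrite <- H4y. field. exact HK. }
  unfold center, h5, Defs.dist; cbn [fst snd].
  set (S1 := (x2-x3)^2+(y2-y3)^2).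
  set (S2 := (x3-x1)^2+(y3-y1)^2).
  set (S3 := (x1-x2)^2+(y1-y2)^2).
  assert (hS1 : 0 < S1).
  { unfold S1. apply sum_sq_pos. intros [h1 h2]. apply HK. unfold K.
    replace x3 with x2 by lra. replace y3 with y2 by lra. ring. }
  assert (hS2 : 0 < S2).
  { unfold S2. apply sum_sq_pos. intros [h1 h2]. apply HK. unfold K.
    replace x3 with x1 by lra. replace y3 with y1 by lra. ring. }
  assert (hS3 : 0 < S3).
  { unfold S3. apply sum_sq_pos. intros [h1 h2]. apply HK. unfold K.
    replace x2 with x1 by lra. replace y2 with y1 by lra. ring. }
  assert (e1 : sqrt S1 ^ 2 = S1) by (apply pow2_sqrt; lra).
  assert (e2 : sqrt S2 ^ 2 = S2) by (apply pow2_sqrt; lra).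
  assert (e3 : sqrt S3 ^ 2 = S3) by (apply pow2_sqrt; lra).
  assert (p1 : 0 < sqrt S1) by (apply sqrt_lt_R0; lra).
  assert (p2 : 0 < sqrt S2) by (apply sqrt_lt_R0; lra).
  assert (p3 : 0 < sqrt S3) by (apply sqrt_lt_R0; lra).
  rewrite e1, e2, e3.
  set (d1 := sqrt S1) in *. set (d2 := sqrt S2) in *. set (d3 := sqrt S3) in *.
  assert (HS : S1*(S2+S3)-(S2-S3)^2 + (S2*(S3+S1)-(S3-S1)^2) + (S3*(S1+S2)-(S1-S2)^2) = 8*K^2).
  { unfold S1, S2, S3, K. ring. }
  assert (HD : d2*d3*(S1*(S2+S3)-(S2-S3)^2)*d1 + d3*d1*(S2*(S3+S1)-(S3-S1)^2)*d2
              + d1*d2*(S3*(S1+S2)-(S1-S2)^2)*d3 = d1*d2*d3*(8*K^2)).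
  { rewrite <- HS. ring. }
  rewrite HD, HOx, HOy. f_equal.
  - unfold S1, S2, S3, K in *. field. repeat split; try lra; exact HK.
  - unfold S1, S2, S3, K in *. field. repeat split; try lra; exact HK.
Qed.

Definition Nf (c s c' s' : R) := 1 - c*c' - s*s'.
Definition Df (a b c s c' s' : R) := a^2*(1 - c*c' + s*s') + b^2*(1 + c*c' - s*s').
Definition chi (a b : R) (P Q : pt) : R :=
  (fst P / a^2)*(snd Q - snd P) - (snd P / b^2)*(fst Q - fst P).

Lemma dist_sq (a b c s c' s' : R) : c^2+s^2=1 -> c'^2+s'^2=1 ->
  Defs.dist (a*c', b*s') (a*c, b*s) ^ 2 = Nf c s c' s' * Df a b c s c' s'.
Proof.
  intros h1 h2. unfold Defs.dist; cbn [fst snd].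
  rewrite pow2_sqrt by (apply Rplus_le_le_0_compat; apply pow2_ge_0). unfold Nf, Df.
  assert (E : (a*c'-a*c)^2+(b*s'-b*s)^2 - (1-c*c'-s*s')*(a^2*(1-c*c'+s*s')+b^2*(1+c*c'-s*s'))
     = (-c'^2*a^2 + c'^2*b^2 + a^2)*(c^2+s^2-1) + (s^2*a^2 - s^2*b^2 + b^2)*(c'^2+s'^2-1)).
  { ring. }
  rewrite h1, h2 in E. lra.
Qed.

Lemma Nf_pos (c s c' s' : R) : c^2+s^2=1 -> c'^2+s'^2=1 -> ~(c = c' /\ s = s') -> 0 < Nf c s c' s'.
Proof.
  intros h1 h2 hne. unfold Nf.
  assert (E : 1 - c*c' - s*s' = ((c-c')^2+(s-s')^2)/2) by (field_simplify; nra).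
  rewrite E.
  assert (0 < (c-c')^2+(s-s')^2).
  { apply sum_sq_pos. intros [e1 e2]. apply hne. split; lra. }
  lra.
Qed.

Lemma Df_pos (a b c s c' s' : R) : 0 < b -> b < a -> c^2+s^2=1 -> c'^2+s'^2=1 ->
  0 < Df a b c s c' s'.
Proof.
  intros hb hab h1 h2. unfold Df.
  assert (E : (c*c'-s*s')^2 + (c*s'+s*c')^2 = (c^2+s^2)*(c'^2+s'^2)) by ring.
  rewrite h1, h2 in E.
  assert (0 <= (c*s'+s*c')^2) by apply pow2_ge_0.
  assert (hb2 : 0 < b^2) by (apply pow_lt; lra).
  assert (hab2 : b^2 < a^2) by nra.
  set (t := c*c'-s*s') in *.
  assert (ht : -1 <= t <= 1).
  { assert (t^2 <= 1) by lra. split; nra. }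
  replace (a ^ 2 * (1 - c * c' + s * s') + b ^ 2 * (1 + c * c' - s * s'))
    with (a^2*(1-t) + b^2*(1+t)) by (unfold t; ring).
  nra.
Qed.

Lemma chi_ratio (a b c s c' s' : R) : 0 < b -> b < a -> c^2+s^2=1 -> c'^2+s'^2=1 ->
  0 < Nf c s c' s' ->
  (chi a b (a*c,b*s) (a*c',b*s') / Defs.dist (a*c',b*s') (a*c,b*s))^2
  = (a^2*s^2+b^2*c^2)/(a^2*b^2) - Nf c s c' s' / Df a b c s c' s'.
Proof.
  intros hb hab h1 h2 hN.
  pose proof (Df_pos a b c s c' s' hb hab h1 h2) as hD.
  pose proof (dist_sq a b c s c' s' h1 h2) as hd2.
  set (d := Defs.dist (a*c',b*s') (a*c,b*s)) in *.
  assert (hd : 0 < d).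
  { assert (0 <= d) by (unfold d; apply sqrt_pos).
    assert (0 < Nf c s c' s' * Df a b c s c' s') by nra.
    destruct (Req_dec d 0) as [e|e]; [rewrite e in hd2; lra | lra]. }
  unfold chi; cbn [fst snd].
  set (N := Nf c s c' s') in *. set (D := Df a b c s c' s') in *.
  assert (HX : (b^2*c*(s'-s) - a^2*s*(c'-c))^2 = N*((a^2*s^2+b^2*c^2)*D - a^2*b^2*N)).
  { unfold N, D, Nf, Df.
    assert (E : (b^2*c*(s'-s) - a^2*s*(c'-c))^2 - (1-c*c'-s*s')*((a^2*s^2+b^2*c^2)*(a^2*(1-c*c'+s*s')+b^2*(1+c*c'-s*s')) - a^2*b^2*(1-c*c'-s*s'))
      = (-c^2*c'^2*a^2*b^2 + c^2*c'^2*b^4 + 2*c*c'*a^2*b^2 - s^2*c'^2*a^4 + 2*s^2*c'^2*a^2*b^2 - s^2*c'^2*b^4 + s^2*s'^2*a^2*b^2 - s^2*s'^2*b^4 + s^2*a^4 - 2*s^2*a^2*b^2 + s^2*b^4 + 2*s*s'*a^2*b^2 + c'^2*b^4 + s'^2*b^4 - a^2*b^2 - b^4)*(c^2+s^2-1)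
       + (s^4*a^4 - 2*s^4*a^2*b^2 + s^4*b^4 + 2*s^2*a^2*b^2 - 2*s^2*b^4 + b^4)*(c'^2+s'^2-1)) by ring.
    rewrite h1, h2 in E. lra. }
  assert (ha : a <> 0) by lra. assert (hb0 : b <> 0) by lra.
  replace (((a * c / a ^ 2 * (b * s' - b * s) - b * s / b ^ 2 * (a * c' - a * c)) / d) ^ 2)
    with ((b^2*c*(s'-s) - a^2*s*(c'-c))^2 / (a^2*b^2*d^2)) by (field; lra).
  rewrite HX, hd2. field. repeat split; lra.
Qed.

Lemma nb_form (a b : R) (P Q S : pt) :
  normal_bisects a b P Q S <->
  chi a b P Q / Defs.dist Q P + chi a b P S / Defs.dist S P = 0.
Proof.
  unfold normal_bisects, cross, chi.
  match goal with |- ?l = 0 <-> ?r = 0 => replace l with r by (unfold Rdiv; ring) end.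
  tauto.
Qed.

Lemma sign_lemma (n1 n2 u1 u2 v1 v2 : R) :
  u1^2+u2^2 = 1 -> v1^2+v2^2 = 1 -> n1*u1+n2*u2 < 0 -> n1*v1+n2*v2 < 0 ->
  n1*(u2-v2) - n2*(u1-v1) = 0 -> u1 = v1 /\ u2 = v2.
Proof.
  intros hu hv hnu hnv hc.
  assert (E : (n1*(u1+v1)+n2*(u2+v2))*((u1-v1)^2+(u2-v2)^2)
     = (n1*(u1-v1)+n2*(u2-v2))*((u1^2+u2^2)-(v1^2+v2^2))
       + (n1*(u2-v2)-n2*(u1-v1))*((u1+v1)*(u2-v2)-(u2+v2)*(u1-v1))) by ring.
  rewrite hu, hv, hc in E.
  assert (Z : (u1-v1)^2+(u2-v2)^2 = 0).
  { assert (hneg : n1*(u1+v1)+n2*(u2+v2) < 0) by lra.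
    apply (Rmult_eq_reg_l (n1*(u1+v1)+n2*(u2+v2))); [|lra]. lra. }
  destruct (Req_dec u1 v1) as [e1|e1]; destruct (Req_dec u2 v2) as [e2|e2]; auto;
  exfalso; assert (0 < (u1-v1)^2+(u2-v2)^2) by (apply sum_sq_pos; intros [h h']; lra); lra.
Qed.

Lemma dist_pos_unit (a b c s c' s' : R) : 0 < b -> b < a -> c^2+s^2=1 -> c'^2+s'^2=1 ->
  0 < Nf c s c' s' -> 0 < Defs.dist (a*c',b*s') (a*c,b*s).
Proof.
  intros hb hab h1 h2 hN.
  pose proof (Df_pos a b c s c' s' hb hab h1 h2).
  pose proof (dist_sq a b c s c' s' h1 h2) as hd2.
  assert (0 <= Defs.dist (a*c',b*s') (a*c,b*s)) by (unfold Defs.dist; apply sqrt_pos).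
  destruct (Req_dec (Defs.dist (a*c',b*s') (a*c,b*s)) 0) as [e|e].
  - rewrite e in hd2. nra.
  - lra.
Qed.

Lemma mu_eq (a b c s c' s' c'' s'' : R) : 0 < b -> b < a ->
  c^2+s^2=1 -> c'^2+s'^2=1 -> c''^2+s''^2=1 ->
  0 < Nf c s c' s' -> 0 < Nf c s c'' s'' ->
  normal_bisects a b (a*c,b*s) (a*c',b*s') (a*c'',b*s'') ->
  Nf c s c' s' / Df a b c s c' s' = Nf c s c'' s'' / Df a b c s c'' s''.
Proof.
  intros hb hab h h' h'' hN' hN'' Hnb.
  apply nb_form in Hnb.
  pose proof (chi_ratio a b c s c' s' hb hab h h' hN') as r1.
  pose proof (chi_ratio a b c s c'' s'' hb hab h h'' hN'') as r2.
  assert (e : chi a b (a * c, b * s) (a * c', b * s') / Defs.dist (a * c', b * s') (a * c, b * s)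
     = - (chi a b (a * c, b * s) (a * c'', b * s'') / Defs.dist (a * c'', b * s'') (a * c, b * s))) by lra.
  rewrite e in r1. assert (E2 : forall z:R, (-z)^2 = z^2) by (intro; ring). rewrite E2 in r1.
  lra.
Qed.

Lemma bis (a b c s c' s' c'' s'' : R) : 0 < b -> b < a ->
  c^2+s^2=1 -> c'^2+s'^2=1 -> c''^2+s''^2=1 ->
  0 < Nf c s c' s' -> 0 < Nf c s c'' s'' ->
  Nf c s c' s' / Df a b c s c' s' = Nf c s c'' s'' / Df a b c s c'' s'' ->
  cross (a*c'-a*c) (b*s'-b*s) (a*c''-a*c) (b*s''-b*s) <> 0 ->
  normal_bisects a b (a*c,b*s) (a*c',b*s') (a*c'',b*s'').
Proof.
  intros hb hab h h' h'' hN' hN'' Hmu Hnd.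
  apply nb_form.
  pose proof (chi_ratio a b c s c' s' hb hab h h' hN') as r1.
  pose proof (chi_ratio a b c s c'' s'' hb hab h h'' hN'') as r2.
  pose proof (dist_pos_unit a b c s c' s' hb hab h h' hN') as d1p.
  pose proof (dist_pos_unit a b c s c'' s'' hb hab h h'' hN'') as d2p.
  pose proof (dist_sq a b c s c' s' h h') as d1s.
  pose proof (dist_sq a b c s c'' s'' h h'') as d2s.
  set (d1 := Defs.dist (a*c',b*s') (a*c,b*s)) in *.
  set (d2 := Defs.dist (a*c'',b*s'') (a*c,b*s)) in *.
  set (X1 := chi a b (a*c,b*s) (a*c',b*s') / d1) in *.
  set (X2 := chi a b (a*c,b*s) (a*c'',b*s'') / d2) in *.
  assert (Hsq : X1^2 = X2^2) by (rewrite r1, r2, Hmu; reflexivity).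
  assert (Hf : (X1 + X2)*(X1 - X2) = 0) by (rewrite <- (Rminus_diag_eq _ _ Hsq); ring).
  apply Rmult_integral in Hf. destruct Hf as [Hf|Hf]; [exact Hf|].
  exfalso. apply Hnd.
  set (u1 := (a*c'-a*c)/d1). set (u2 := (b*s'-b*s)/d1).
  set (v1 := (a*c''-a*c)/d2). set (v2 := (b*s''-b*s)/d2).
  assert (ha : a <> 0) by lra. assert (hb0 : b <> 0) by lra.
  assert (D1 : d1^2 = (a*c'-a*c)^2 + (b*s'-b*s)^2).
  { unfold d1, Defs.dist; cbn [fst snd]. apply pow2_sqrt.
    apply Rplus_le_le_0_compat; apply pow2_ge_0. }
  assert (D2 : d2^2 = (a*c''-a*c)^2 + (b*s''-b*s)^2).
  { unfold d2, Defs.dist; cbn [fst snd]. apply pow2_sqrt.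
    apply Rplus_le_le_0_compat; apply pow2_ge_0. }
  assert (hu : u1^2+u2^2 = 1).
  { replace (u1^2+u2^2) with (((a*c'-a*c)^2+(b*s'-b*s)^2)/d1^2) by (unfold u1, u2; field; lra).
    rewrite <- D1. field. lra. }
  assert (hv : v1^2+v2^2 = 1).
  { replace (v1^2+v2^2) with (((a*c''-a*c)^2+(b*s''-b*s)^2)/d2^2) by (unfold v1, v2; field; lra).
    rewrite <- D2. field. lra. }
  assert (hnu : (a*c/a^2)*u1 + (b*s/b^2)*u2 < 0).
  { replace ((a*c/a^2)*u1 + (b*s/b^2)*u2) with (- Nf c s c' s' / d1).
    - apply Ropp_lt_cancel. rewrite Ropp_0. unfold Rdiv. rewrite Ropp_mult_distr_l, Ropp_involutive.
      apply Rmult_lt_0_compat; [lra| apply Rinv_0_lt_compat; lra].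
    - unfold u1, u2, Nf.
      replace (1 - c*c' - s*s') with (c^2+s^2 - c*c' - s*s') by (rewrite h; ring).
      field. repeat split; lra. }
  assert (hnv : (a*c/a^2)*v1 + (b*s/b^2)*v2 < 0).
  { replace ((a*c/a^2)*v1 + (b*s/b^2)*v2) with (- Nf c s c'' s'' / d2).
    - apply Ropp_lt_cancel. rewrite Ropp_0. unfold Rdiv. rewrite Ropp_mult_distr_l, Ropp_involutive.
      apply Rmult_lt_0_compat; [lra| apply Rinv_0_lt_compat; lra].
    - unfold v1, v2, Nf.
      replace (1 - c*c'' - s*s'') with (c^2+s^2 - c*c'' - s*s'') by (rewrite h; ring).
      field. repeat split; lra. }
  assert (hc : (a*c/a^2)*(u2-v2) - (b*s/b^2)*(u1-v1) = 0).
  { rewrite <- Hf. unfold X1, X2, chi, u1, u2, v1, v2; cbn [fst snd]. unfold Rdiv. ring. }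
  destruct (sign_lemma _ _ _ _ _ _ hu hv hnu hnv hc) as [e1 e2].
  unfold cross.
  replace (a*c'-a*c) with (d1*u1) by (unfold u1; field; lra).
  replace (b*s'-b*s) with (d1*u2) by (unfold u2; field; lra).
  replace (a*c''-a*c) with (d2*v1) by (unfold v1; field; lra).
  replace (b*s''-b*s) with (d2*v2) by (unfold v2; field; lra).
  rewrite e1, e2. ring.
Qed.

Lemma decomp (N1 N2 be u1 u2 v1 v2 : R) :
  u1^2+u2^2 = 1 -> v1^2+v2^2 = 1 ->
  N1*u1+N2*u2 = be -> N1*v1+N2*v2 = be -> ~(u1 = v1 /\ u2 = v2) ->
  N1^2+N2^2 <> 0 ->
  let r := -N2*u1 + N1*u2 in
  u1 = (be*N1 - r*N2)/(N1^2+N2^2) /\ u2 = (be*N2 + r*N1)/(N1^2+N2^2) /\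
  v1 = (be*N1 + r*N2)/(N1^2+N2^2) /\ v2 = (be*N2 - r*N1)/(N1^2+N2^2) /\
  r^2 = N1^2+N2^2 - be^2.
Proof.
  intros hu hv h1 h2 hne hnn r.
  assert (hd : 0 < (u1-v1)^2+(u2-v2)^2) by (apply sum_sq_pos; intros [e e']; apply hne; split; lra).
  assert (Hz : -N2*(u1+v1) + N1*(u2+v2) = 0).
  { assert (E : (-N2*(u1+v1) + N1*(u2+v2))*((u1-v1)^2+(u2-v2)^2)
        = (N1*(u1-v1)+N2*(u2-v2))*((u1-v1)*(u2+v2)-(u2-v2)*(u1+v1))
          + ((u1+v1)*(u1-v1)+(u2+v2)*(u2-v2))*(N1*(u2-v2)-N2*(u1-v1))) by ring.
    replace (N1*(u1-v1)+N2*(u2-v2)) with 0 in E by lra.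
    replace ((u1+v1)*(u1-v1)+(u2+v2)*(u2-v2)) with 0 in E by lra.
    assert (E' : (-N2*(u1+v1) + N1*(u2+v2))*((u1-v1)^2+(u2-v2)^2) = 0) by lra.
    apply Rmult_integral in E'. destruct E' as [E'|E']; [exact E'|lra]. }
  assert (Hr2 : -N2*v1 + N1*v2 = -r) by (unfold r; lra).
  assert (X1 : be*N1 - r*N2 = u1*(N1^2+N2^2)) by (rewrite <- h1; unfold r; ring).
  assert (X2 : be*N2 + r*N1 = u2*(N1^2+N2^2)) by (rewrite <- h1; unfold r; ring).
  assert (X3 : be*N1 + r*N2 = v1*(N1^2+N2^2)).
  { rewrite <- h2. replace r with (-(-N2*v1 + N1*v2)) by lra. ring. }
  assert (X4 : be*N2 - r*N1 = v2*(N1^2+N2^2)).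
  { rewrite <- h2. replace r with (-(-N2*v1 + N1*v2)) by lra. ring. }
  repeat split.
  - rewrite X1. field. exact hnn.
  - rewrite X2. field. exact hnn.
  - rewrite X3. field. exact hnn.
  - rewrite X4. field. exact hnn.
  - assert (E : (N1^2+N2^2)*(u1^2+u2^2) = (N1*u1+N2*u2)^2 + r^2) by (unfold r; ring).
    rewrite hu, h1 in E. lra.
Qed.

Lemma closure (c s c2 s2 c3 s3 m A B : R) :
  0 < B -> B < A -> 0 < m ->
  c^2+s^2=1 -> c2^2+s2^2=1 -> c3^2+s3^2=1 ->
  ~(c2 = c3 /\ s2 = s3) ->
  (1-m*(A+B)) - (1-m*(A-B))*c*c2 - (1+m*(A-B))*s*s2 = 0 ->
  (1-m*(A+B)) - (1-m*(A-B))*c*c3 - (1+m*(A-B))*s*s3 = 0 ->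
  (1-m*(A+B)) - (1-m*(A-B))*c2*c3 - (1+m*(A-B))*s2*s3 = 0 ->
  3 - 2*m*(A+B) - m^2*(A-B)^2 = 0.
Proof.
  intros hB hAB hm h1 h2 h3 hne r12 r13 r23.
  set (K1 := 1-m*(A-B)) in *. set (K2 := 1+m*(A-B)) in *. set (al := 1-m*(A+B)) in *.
  assert (e12 : (K1*c)*c2 + (K2*s)*s2 = al) by lra.
  assert (e13 : (K1*c)*c3 + (K2*s)*s3 = al) by lra.
  assert (hnn : (K1*c)^2+(K2*s)^2 <> 0).
  { intro H0.
    assert (z1 : K1*c = 0).
    { destruct (Req_dec (K1*c) 0) as [e|e]; auto.
      pose proof (sq_pos _ e). pose proof (pow2_ge_0 (K2*s)). lra. }
    assert (z2 : K2*s = 0).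
    { destruct (Req_dec (K2*s) 0) as [e|e]; auto.
      pose proof (sq_pos _ e). pose proof (pow2_ge_0 (K1*c)). lra. }
    rewrite z1, z2 in e12. assert (al = 0) by lra.
    assert (hm' : m*(A+B) = 1) by (unfold al in *; lra).
    assert (K1 > 0). { unfold K1. assert (0 < m*B) by (apply Rmult_lt_0_compat; lra). assert (m*(A-B) = m*(A+B) - 2*(m*B)) by ring. lra. }
    assert (K2 > 0). { unfold K2. assert (0 < m*(A-B)) by (apply Rmult_lt_0_compat; lra). lra. }
    assert (c = 0). { apply (Rmult_eq_reg_l K1); lra. }
    assert (s = 0). { apply (Rmult_eq_reg_l K2); lra. }
    subst. lra. }
  destruct (decomp (K1*c) (K2*s) al c2 s2 c3 s3 h2 h3 e12 e13 hne hnn)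
    as [ec2 [es2 [ec3 [es3 hr]]]].
  set (r := - (K2*s)*c2 + (K1*c)*s2) in *.
  set (nn := (K1*c)^2+(K2*s)^2) in *.
  assert (HP : K1*(al*K1*c-r*K2*s)*(al*K1*c+r*K2*s)+K2*(al*K2*s+r*K1*c)*(al*K2*s-r*K1*c)-al*nn*nn = 0).
  { assert (E : al - K1*c2*c3 - K2*s2*s3 = 0) by lra.
    rewrite ec2, es2, ec3, es3 in E.
    assert (E2 : (al - K1*((al*(K1*c) - r*(K2*s))/nn)*((al*(K1*c) + r*(K2*s))/nn)
                  - K2*((al*(K2*s) + r*(K1*c))/nn)*((al*(K2*s) - r*(K1*c))/nn))*nn^2
        = -(K1*(al*K1*c-r*K2*s)*(al*K1*c+r*K2*s)+K2*(al*K2*s+r*K1*c)*(al*K2*s-r*K1*c)-al*nn*nn))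
      by (field; exact hnn).
    rewrite E in E2. lra. }
  assert (Hid : K1*(al*K1*c-r*K2*s)*(al*K1*c+r*K2*s)+K2*(al*K2*s+r*K1*c)*(al*K2*s-r*K1*c)-al*nn*nn
     - m*(3 - 2*m*(A+B) - m^2*(A-B)^2)*(B+(A-B)*s^2)*(-2*K1^2-8*m*(A-B)*s^2)
     = (-c^2*m^3*A^3 + 3*c^2*m^3*A^2*B - 3*c^2*m^3*A*B^2 + c^2*m^3*B^3 + c^2*m^2*A^2 - 2*c^2*m^2*A*B + c^2*m^2*B^2 + c^2*m*A - c^2*m*B - c^2 + s^2*m^3*A^3 - 3*s^2*m^3*A^2*B + 3*s^2*m^3*A*B^2 - s^2*m^3*B^3 + s^2*m^2*A^2 - 2*s^2*m^2*A*B + s^2*m^2*B^2 - s^2*m*A + s^2*m*B - s^2)*(r^2 - (nn - al^2)) + (2*c^2*m^5*A^4*B - 8*c^2*m^5*A^3*B^2 + 12*c^2*m^5*A^2*B^3 - 8*c^2*m^5*A*B^4 + 2*c^2*m^5*B^5 - 2*c^2*m^4*A^4 + 12*c^2*m^4*A^2*B^2 - 16*c^2*m^4*A*B^3 + 6*c^2*m^4*B^4 + 8*c^2*m^3*A^3 - 12*c^2*m^3*A^2*B + 4*c^2*m^3*B^3 - 12*c^2*m^2*A^2 + 16*c^2*m^2*A*B - 4*c^2*m^2*B^2 + 8*c^2*m*A - 6*c^2*m*B - 2*c^2 + 2*s^2*m^5*A^5 - 8*s^2*m^5*A^4*B + 12*s^2*m^5*A^3*B^2 - 8*s^2*m^5*A^2*B^3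 + 2*s^2*m^5*A*B^4 - 2*s^2*m^4*A^4 + 16*s^2*m^4*A^3*B - 36*s^2*m^4*A^2*B^2 + 32*s^2*m^4*A*B^3 - 10*s^2*m^4*B^4 - 12*s^2*m^3*A^3 + 16*s^2*m^3*A^2*B + 4*s^2*m^3*A*B^2 - 8*s^2*m^3*B^3 + 20*s^2*m^2*A^2 - 32*s^2*m^2*A*B + 12*s^2*m^2*B^2 - 6*s^2*m*A + 8*s^2*m*B - 2*s^2 + 2*m^5*A^4*B - 8*m^5*A^3*B^2 + 12*m^5*A^2*B^3 - 8*m^5*A*B^4 + 2*m^5*B^5 + 8*m^4*A^2*B^2 - 16*m^4*A*B^3 + 8*m^4*B^4 - 12*m^3*A^2*B + 8*m^3*A*B^2 + 4*m^3*B^3 + 16*m^2*A*B - 8*m^2*B^2 - 6*m*B)*(c^2+s^2-1)).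
  { unfold nn, K1, K2, al. ring. }
  rewrite HP, hr, h1 in Hid.
  replace (nn - al^2 - (nn - al^2)) with 0 in Hid by ring.
  replace (1 - 1) with 0 in Hid by ring.
  assert (Hq : -2*K1^2-8*m*(A-B)*s^2 < 0).
  { destruct (Req_dec s 0) as [e|e].
    - subst s. assert (K1 <> 0).
      { intro z. apply hnn. unfold nn. rewrite z. ring. }
      pose proof (sq_pos _ H). lra.
    - pose proof (sq_pos _ e). pose proof (pow2_ge_0 K1).
      assert (0 < m*(A-B)*s^2) by (apply Rmult_lt_0_compat; [apply Rmult_lt_0_compat; lra|lra]). lra. }
  assert (Hb : 0 < B+(A-B)*s^2) by (pose proof (pow2_ge_0 s); assert (0 <= (A-B)*s^2) by (apply Rmult_le_pos; lra); lra).
  assert (Hprod : m*(3 - 2*m*(A+B) - m^2*(A-B)^2)*(B+(A-B)*s^2)*(-2*K1^2-8*m*(A-B)*s^2) = 0) by lra.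
  apply Rmult_integral in Hprod. destruct Hprod as [Hprod|Hprod]; [|lra].
  apply Rmult_integral in Hprod. destruct Hprod as [Hprod|Hprod]; [|lra].
  apply Rmult_integral in Hprod. destruct Hprod as [Hprod|Hprod]; [lra|exact Hprod].
Qed.

Definition Wf (p q c s : R) := p^2*c^2 + q^2*s^2.
Definition cf (p q c s rho : R) := (-p^2*q*c - rho*q*s)/((p+q)*Wf p q c s).
Definition sf (p q c s rho : R) := (-p*q^2*s + rho*p*c)/((p+q)*Wf p q c s).
Definition Xcf (p q c s : R) :=
  (q-p)*(p^2+5*p*q+2*q^2)*c*((q^2+2*p*q)*s^2 - p^2*c^2)/(4*q*(2*p+q)*(p+q)*Wf p q c s).
Definition Xsf (p q c s : R) :=
  (q-p)*(2*p^2+5*p*q+q^2)*s*(q^2*s^2 - (p^2+2*p*q)*c^2)/(4*p*(p+2*q)*(p+q)*Wf p q c s).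

Lemma Wf_pos (p q c s : R) : 0 < p -> p < q -> c^2+s^2=1 -> p^2 <= Wf p q c s.
Proof.
  intros hp hpq h. unfold Wf.
  assert (p^2 <= q^2) by (apply pow_incr; lra).
  assert (0 <= s^2) by apply pow2_ge_0.
  replace (p^2) with (p^2*(c^2+s^2)) at 1 by (rewrite h; ring).
  assert (p^2*s^2 <= q^2*s^2) by (apply Rmult_le_compat_r; lra). lra.
Qed.



Lemma polyU2 (p q c s rho : R) :
  c^2+s^2=1 -> rho^2 = (p+q)^2*(p^2*c^2+q^2*s^2) - p^2*q^2 ->
  (-p^2*q*c - rho*q*s)^2+(-p*q^2*s + rho*p*c)^2-((p+q)*(p^2*c^2+q^2*s^2))^2 = 0.
Proof.
  intros h hr.
  assert (H : (-p^2*q*c - rho*q*s)^2+(-p*q^2*s + rho*p*c)^2-((p+q)*(p^2*c^2+q^2*s^2))^2 = (c^2*p^2 + s^2*q^2)*(rho^2 - ((p+q)^2*(p^2*c^2+q^2*s^2) - p^2*q^2)) + 0*(c^2+s^2-1)) by ring.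
  rewrite H, hr, h. ring.
Qed.

Lemma polyU3 (p q c s rho : R) :
  c^2+s^2=1 -> rho^2 = (p+q)^2*(p^2*c^2+q^2*s^2) - p^2*q^2 ->
  (-p^2*q*c + rho*q*s)^2+(-p*q^2*s - rho*p*c)^2-((p+q)*(p^2*c^2+q^2*s^2))^2 = 0.
Proof.
  intros h hr.
  assert (H : (-p^2*q*c + rho*q*s)^2+(-p*q^2*s - rho*p*c)^2-((p+q)*(p^2*c^2+q^2*s^2))^2 = (c^2*p^2 + s^2*q^2)*(rho^2 - ((p+q)^2*(p^2*c^2+q^2*s^2) - p^2*q^2)) + 0*(c^2+s^2-1)) by ring.
  rewrite H, hr, h. ring.
Qed.

Lemma polyR23 (p q c s rho : R) :
  c^2+s^2=1 -> rho^2 = (p+q)^2*(p^2*c^2+q^2*s^2) - p^2*q^2 ->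
  (p+q)*(p*(-p^2*q*c - rho*q*s)*(-p^2*q*c + rho*q*s)+q*(-p*q^2*s + rho*p*c)*(-p*q^2*s - rho*p*c))+p*q*((p+q)*(p^2*c^2+q^2*s^2))^2 = 0.
Proof.
  intros h hr.
  assert (H : (p+q)*(p*(-p^2*q*c - rho*q*s)*(-p^2*q*c + rho*q*s)+q*(-p*q^2*s + rho*p*c)*(-p*q^2*s - rho*p*c))+p*q*((p+q)*(p^2*c^2+q^2*s^2))^2 = (-c^2*p^3*q - c^2*p^2*q^2 - s^2*p^2*q^2 - s^2*p*q^3)*(rho^2 - ((p+q)^2*(p^2*c^2+q^2*s^2) - p^2*q^2)) + (-c^2*p^6*q^2 - 2*c^2*p^5*q^3 - c^2*p^4*q^4 - s^2*p^4*q^4 - 2*s^2*p^3*q^5 - s^2*p^2*q^6)*(c^2+s^2-1)) by ring.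
  rewrite H, hr, h. ring.
Qed.

Lemma polyK (p q c s rho : R) :
  c^2+s^2=1 -> rho^2 = (p+q)^2*(p^2*c^2+q^2*s^2) - p^2*q^2 ->
  ((-p^2*q*c - rho*q*s)-((p+q)*(p^2*c^2+q^2*s^2))*c)*((-p*q^2*s - rho*p*c)-((p+q)*(p^2*c^2+q^2*s^2))*s)-((-p*q^2*s + rho*p*c)-((p+q)*(p^2*c^2+q^2*s^2))*s)*((-p^2*q*c + rho*q*s)-((p+q)*(p^2*c^2+q^2*s^2))*c) - rho*(2*(q^2-p^2)^2*s^4+4*p*(p+q)^2*(q-p)*s^2+2*p^3*(p+2*q)) = 0.
Proof.
  intros h hr.
  assert (H : ((-p^2*q*c - rho*q*s)-((p+q)*(p^2*c^2+q^2*s^2))*c)*((-p*q^2*s - rho*p*c)-((p+q)*(p^2*c^2+q^2*s^2))*s)-((-p*q^2*s + rho*p*c)-((p+q)*(p^2*c^2+q^2*s^2))*s)*((-p^2*q*c + rho*q*s)-((p+q)*(p^2*c^2+q^2*s^2))*c) - rho*(2*(q^2-p^2)^2*s^4+4*p*(p+q)^2*(q-p)*s^2+2*p^3*(p+2*q)) = 0*(rho^2 - ((p+q)^2*(p^2*c^2+q^2*s^2) - p^2*q^2)) + (2*c^2*rho*p^4 + 2*c^2*rho*p^3*q - 2*s^2*rho*p^4 + 4*s^2*rho*p^2*q^2 + 2*s^2*rho*p*q^3 + 2*rho*p^4 + 4*rho*p^3*q)*(c^2+s^2-1)) by ring.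
  rewrite H, hr, h. ring.
Qed.

Lemma polyE1 (p q c s rho : R) :
  c^2+s^2=1 -> rho^2 = (p+q)^2*(p^2*c^2+q^2*s^2) - p^2*q^2 ->
  ((-p^2*q*c - rho*q*s)-((p+q)*(p^2*c^2+q^2*s^2))*c)*(4*q*(2*p+q)*(((p+q)*(p^2*c^2+q^2*s^2))*c+(-p^2*q*c - rho*q*s)+(-p^2*q*c + rho*q*s)) - 2*((q-p)*(p^2+5*p*q+2*q^2)*c*((q^2+2*p*q)*s^2 - p^2*c^2)))+((-p*q^2*s + rho*p*c)-((p+q)*(p^2*c^2+q^2*s^2))*s)*(4*p*(p+2*q)*(((p+q)*(p^2*c^2+q^2*s^2))*s+(-p*q^2*s + rho*p*c)+(-p*q^2*s - rho*p*c)) - 2*((q-p)*(2*p^2+5*p*q+q^2)*s*(q^2*s^2 - (p^2+2*p*q)*c^2)))-2*(q*(q+2*p)*((-p^2*q*c - rho*q*s)^2-((p+q)*(p^2*c^2+q^2*s^2))^2*c^2)+p*(p+2*q)*((-p*q^2*s + rho*p*c)^2-((p+q)*(p^2*c^2+q^2*s^2))^2*s^2)) = 0.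
Proof.
  intros h hr.
  assert (H : ((-p^2*q*c - rho*q*s)-((p+q)*(p^2*c^2+q^2*s^2))*c)*(4*q*(2*p+q)*(((p+q)*(p^2*c^2+q^2*s^2))*c+(-p^2*q*c - rho*q*s)+(-p^2*q*c + rho*q*s)) - 2*((q-p)*(p^2+5*p*q+2*q^2)*c*((q^2+2*p*q)*s^2 - p^2*c^2)))+((-p*q^2*s + rho*p*c)-((p+q)*(p^2*c^2+q^2*s^2))*s)*(4*p*(p+2*q)*(((p+q)*(p^2*c^2+q^2*s^2))*s+(-p*q^2*s + rho*p*c)+(-p*q^2*s - rho*p*c)) - 2*((q-p)*(2*p^2+5*p*q+q^2)*s*(q^2*s^2 - (p^2+2*p*q)*c^2)))-2*(q*(q+2*p)*((-p^2*q*c - rho*q*s)^2-((p+q)*(p^2*c^2+q^2*s^2))^2*c^2)+p*(p+2*q)*((-p*q^2*s + rho*p*c)^2-((p+q)*(p^2*c^2+q^2*s^2))^2*s^2)) = (-2*c^2*p^4 - 4*c^2*p^3*q - 4*s^2*p*q^3 - 2*s^2*q^4)*(rho^2 - ((p+q)^2*(p^2*c^2+q^2*s^2) - p^2*q^2)) + (2*c^4*p^8 + 6*c^4*p^7*q - 8*c^4*p^6*q^2 - 18*c^4*p^5*q^3 - 6*c^4*p^4*q^4 - 4*c^2*s^2*p^6*q^2 - 12*c^2*s^2*p^5*q^3 - 16*c^2*s^2*p^4*q^4 - 12*c^2*s^2*p^3*q^5 - 4*c^2*s^2*p^2*q^6 - 2*c^2*p^6*q^2 - 16*c^2*p^5*q^3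 - 6*c^2*p^4*q^4 + 4*c*s*rho*p^4*q^2 - 4*c*s*rho*p^2*q^4 - 6*s^4*p^4*q^4 - 18*s^4*p^3*q^5 - 8*s^4*p^2*q^6 + 6*s^4*p*q^7 + 2*s^4*q^8 - 6*s^2*p^4*q^4 - 16*s^2*p^3*q^5 - 2*s^2*p^2*q^6)*(c^2+s^2-1)) by ring.
  rewrite H, hr, h. ring.
Qed.

Lemma polyE2 (p q c s rho : R) :
  c^2+s^2=1 -> rho^2 = (p+q)^2*(p^2*c^2+q^2*s^2) - p^2*q^2 ->
  ((-p^2*q*c + rho*q*s)-((p+q)*(p^2*c^2+q^2*s^2))*c)*(4*q*(2*p+q)*(((p+q)*(p^2*c^2+q^2*s^2))*c+(-p^2*q*c - rho*q*s)+(-p^2*q*c + rho*q*s)) - 2*((q-p)*(p^2+5*p*q+2*q^2)*c*((q^2+2*p*q)*s^2 - p^2*c^2)))+((-p*q^2*s - rho*p*c)-((p+q)*(p^2*c^2+q^2*s^2))*s)*(4*p*(p+2*q)*(((p+q)*(p^2*c^2+q^2*s^2))*s+(-p*q^2*s + rho*p*c)+(-p*q^2*s - rho*p*c)) - 2*((q-p)*(2*p^2+5*p*q+q^2)*s*(q^2*s^2 - (p^2+2*p*q)*c^2)))-2*(q*(q+2*p)*((-p^2*q*c + rho*q*s)^2-((p+q)*(p^2*c^2+q^2*s^2))^2*c^2)+p*(p+2*q)*((-p*q^2*s - rho*p*c)^2-((p+q)*(p^2*c^2+q^2*s^2))^2*s^2)) = 0.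
Proof.
  intros h hr.
  assert (H : ((-p^2*q*c + rho*q*s)-((p+q)*(p^2*c^2+q^2*s^2))*c)*(4*q*(2*p+q)*(((p+q)*(p^2*c^2+q^2*s^2))*c+(-p^2*q*c - rho*q*s)+(-p^2*q*c + rho*q*s)) - 2*((q-p)*(p^2+5*p*q+2*q^2)*c*((q^2+2*p*q)*s^2 - p^2*c^2)))+((-p*q^2*s - rho*p*c)-((p+q)*(p^2*c^2+q^2*s^2))*s)*(4*p*(p+2*q)*(((p+q)*(p^2*c^2+q^2*s^2))*s+(-p*q^2*s + rho*p*c)+(-p*q^2*s - rho*p*c)) - 2*((q-p)*(2*p^2+5*p*q+q^2)*s*(q^2*s^2 - (p^2+2*p*q)*c^2)))-2*(q*(q+2*p)*((-p^2*q*c + rho*q*s)^2-((p+q)*(p^2*c^2+q^2*s^2))^2*c^2)+p*(p+2*q)*((-p*q^2*s - rho*p*c)^2-((p+q)*(p^2*c^2+q^2*s^2))^2*s^2)) = (-2*c^2*p^4 - 4*c^2*p^3*q - 4*s^2*p*q^3 - 2*s^2*q^4)*(rho^2 - ((p+q)^2*(p^2*c^2+q^2*s^2) - p^2*q^2)) + (2*c^4*p^8 + 6*c^4*p^7*q - 8*c^4*p^6*q^2 - 18*c^4*p^5*q^3 - 6*c^4*p^4*q^4 - 4*c^2*s^2*p^6*q^2 - 12*c^2*s^2*p^5*q^3 - 16*c^2*s^2*p^4*q^4 - 12*c^2*s^2*p^3*q^5 - 4*c^2*s^2*p^2*q^6 - 2*c^2*p^6*q^2 - 16*c^2*p^5*q^3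 - 6*c^2*p^4*q^4 - 4*c*s*rho*p^4*q^2 + 4*c*s*rho*p^2*q^4 - 6*s^4*p^4*q^4 - 18*s^4*p^3*q^5 - 8*s^4*p^2*q^6 + 6*s^4*p*q^7 + 2*s^4*q^8 - 6*s^2*p^4*q^4 - 16*s^2*p^3*q^5 - 2*s^2*p^2*q^6)*(c^2+s^2-1)) by ring.
  rewrite H, hr, h. ring.
Qed.

Lemma d0_pos (p q s : R) : 0 < p -> p < q -> 0 < (2*(q^2-p^2)^2*s^4+4*p*(p+q)^2*(q-p)*s^2+2*p^3*(p+2*q)).
Proof.
  intros hp hpq.
  assert (0 <= 2*(q^2-p^2)^2*s^4) by (apply Rmult_le_pos; [apply Rmult_le_pos; [lra|apply pow2_ge_0]| replace (s^4) with ((s^2)^2) by ring; apply pow2_ge_0]).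
  assert (0 <= 4*p*(p+q)^2*(q-p)*s^2).
  { apply Rmult_le_pos; [|apply pow2_ge_0]. apply Rmult_le_pos; [|lra].
    apply Rmult_le_pos; [lra|apply pow2_ge_0]. }
  assert (0 < 2*p^3*(p+2*q)) by (apply Rmult_lt_0_compat; [apply Rmult_lt_0_compat; [lra|apply pow_lt; lra]|lra]).
  lra.
Qed.

Lemma key (a b p q c s rho : R) : 0 < a -> 0 < b -> 0 < p -> p < q ->
  a^2*(q-p) = q*(q+2*p) -> b^2*(q-p) = p*(p+2*q) ->
  c^2+s^2=1 -> rho^2 = (p+q)^2*(p^2*c^2+q^2*s^2) - p^2*q^2 -> rho <> 0 ->
  center h5 (a*c,b*s) (a*cf p q c s rho, b*sf p q c s rho)
                      (a*cf p q c s (-rho), b*sf p q c s (-rho))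
  = (a*Xcf p q c s, b*Xsf p q c s).
Proof.
  intros ha hb hp hpq hA hB h hr hr0.
  pose proof (Wf_pos p q c s hp hpq h) as hW.
  assert (hp2 : 0 < p^2) by (apply pow_lt; lra).
  assert (hWn : p^2*c^2+q^2*s^2 <> 0) by (unfold Wf in hW; lra).
  assert (ha2 : a^2 = q*(q+2*p)/(q-p)) by (rewrite <- hA; field; lra).
  assert (hb2 : b^2 = p*(p+2*q)/(q-p)) by (rewrite <- hB; field; lra).
  pose proof (d0_pos p q s hp hpq) as hd0.
  rewrite (center_eq _ _ _ _ _ _
     (a*c + a*cf p q c s rho + a*cf p q c s (-rho) - 2*(a*Xcf p q c s))
     (b*s + b*sf p q c s rho + b*sf p q c s (-rho) - 2*(b*Xsf p q c s))).
  - f_equal; field.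
  - assert (HK := polyK p q c s rho h hr).
    replace ((a * cf p q c s rho - a * c) * (b * sf p q c s (- rho) - b * s) -
             (b * sf p q c s rho - b * s) * (a * cf p q c s (- rho) - a * c))
      with (a*b*(((-p^2*q*c - rho*q*s)-((p+q)*(p^2*c^2+q^2*s^2))*c)*((-p*q^2*s - rho*p*c)-((p+q)*(p^2*c^2+q^2*s^2))*s)-((-p*q^2*s + rho*p*c)-((p+q)*(p^2*c^2+q^2*s^2))*s)*((-p^2*q*c + rho*q*s)-((p+q)*(p^2*c^2+q^2*s^2))*c))/(((p+q)*(p^2*c^2+q^2*s^2))^2)).
    + replace (((-p^2*q*c - rho*q*s)-((p+q)*(p^2*c^2+q^2*s^2))*c)*((-p*q^2*s - rho*p*c)-((p+q)*(p^2*c^2+q^2*s^2))*s)-((-p*q^2*s + rho*p*c)-((p+q)*(p^2*c^2+q^2*s^2))*s)*((-p^2*q*c + rho*q*s)-((p+q)*(p^2*c^2+q^2*s^2))*c)) with (rho*(2*(q^2-p^2)^2*s^4+4*p*(p+q)^2*(q-p)*s^2+2*p^3*(p+2*q))) by lra.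
      assert (hD1 : (p+q)*(p^2*c^2+q^2*s^2) <> 0) by (apply Rmult_integral_contrapositive_currified; lra).
      assert (hDD : ((p+q)*(p^2*c^2+q^2*s^2))^2 <> 0) by (apply pow_nonzero; exact hD1).
      intro Z. apply hr0.
      assert (Z2 : (a*b*(2*(q^2-p^2)^2*s^4+4*p*(p+q)^2*(q-p)*s^2+2*p^3*(p+2*q)))*rho = 0).
      { replace ((a*b*(2*(q^2-p^2)^2*s^4+4*p*(p+q)^2*(q-p)*s^2+2*p^3*(p+2*q)))*rho) with ((a*b*(rho*(2*(q^2-p^2)^2*s^4+4*p*(p+q)^2*(q-p)*s^2+2*p^3*(p+2*q)))/(((p+q)*(p^2*c^2+q^2*s^2))^2))*(((p+q)*(p^2*c^2+q^2*s^2))^2)) by (field; split; [replace ((p*c)^2+(q*s)^2) with (p^2*c^2+q^2*s^2) by ring|]; lra).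
        rewrite Z. ring. }
      apply Rmult_integral in Z2. destruct Z2 as [Z2|Z2]; [|exact Z2].
      exfalso. assert (0 < a*b*(2*(q^2-p^2)^2*s^4+4*p*(p+q)^2*(q-p)*s^2+2*p^3*(p+2*q))) by (apply Rmult_lt_0_compat; [apply Rmult_lt_0_compat|]; lra). lra.
    + unfold cf, sf, Wf. field. split; lra.
  - apply Rminus_diag_uniq.
    assert (HE := polyE1 p q c s rho h hr).
    match goal with |- ?L = 0 =>
      replace L with (a^2*(2*(cf p q c s rho - c)*(c + cf p q c s rho + cf p q c s (-rho) - 2*Xcf p q c s) - (cf p q c s rho^2 - c^2))
                    + b^2*(2*(sf p q c s rho - s)*(s + sf p q c s rho + sf p q c s (-rho) - 2*Xsf p q c s) - (sf p q c s rho^2 - s^2))) by ring end.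
    rewrite ha2, hb2.
    transitivity ((((-p^2*q*c - rho*q*s)-((p+q)*(p^2*c^2+q^2*s^2))*c)*(4*q*(2*p+q)*(((p+q)*(p^2*c^2+q^2*s^2))*c+(-p^2*q*c - rho*q*s)+(-p^2*q*c + rho*q*s)) - 2*((q-p)*(p^2+5*p*q+2*q^2)*c*((q^2+2*p*q)*s^2 - p^2*c^2)))+((-p*q^2*s + rho*p*c)-((p+q)*(p^2*c^2+q^2*s^2))*s)*(4*p*(p+2*q)*(((p+q)*(p^2*c^2+q^2*s^2))*s+(-p*q^2*s + rho*p*c)+(-p*q^2*s - rho*p*c)) - 2*((q-p)*(2*p^2+5*p*q+q^2)*s*(q^2*s^2 - (p^2+2*p*q)*c^2)))-2*(q*(q+2*p)*((-p^2*q*c - rho*q*s)^2-((p+q)*(p^2*c^2+q^2*s^2))^2*c^2)+p*(p+2*q)*((-p*q^2*s + rho*p*c)^2-((p+q)*(p^2*c^2+q^2*s^2))^2*s^2)))/(2*(q-p)*((p+q)*(p^2*c^2+q^2*s^2))^2)).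
    + unfold cf, sf, Xcf, Xsf, Wf. field. repeat split; lra.
    + rewrite HE. unfold Rdiv. ring.
  - apply Rminus_diag_uniq.
    assert (HE := polyE2 p q c s rho h hr).
    match goal with |- ?L = 0 =>
      replace L with (a^2*(2*(cf p q c s (-rho) - c)*(c + cf p q c s rho + cf p q c s (-rho) - 2*Xcf p q c s) - (cf p q c s (-rho)^2 - c^2))
                    + b^2*(2*(sf p q c s (-rho) - s)*(s + sf p q c s rho + sf p q c s (-rho) - 2*Xsf p q c s) - (sf p q c s (-rho)^2 - s^2))) by ring end.
    rewrite ha2, hb2.
    transitivity ((((-p^2*q*c + rho*q*s)-((p+q)*(p^2*c^2+q^2*s^2))*c)*(4*q*(2*p+q)*(((p+q)*(p^2*c^2+q^2*s^2))*c+(-p^2*q*c - rho*q*s)+(-p^2*q*c + rho*q*s)) - 2*((q-p)*(p^2+5*p*q+2*q^2)*c*((q^2+2*p*q)*s^2 - p^2*c^2)))+((-p*q^2*s - rho*p*c)-((p+q)*(p^2*c^2+q^2*s^2))*s)*(4*p*(p+2*q)*(((p+q)*(p^2*c^2+q^2*s^2))*s+(-p*q^2*s + rho*p*c)+(-p*q^2*s - rho*p*c)) - 2*((q-p)*(2*p^2+5*p*q+q^2)*s*(q^2*s^2 - (p^2+2*p*q)*c^2)))-2*(q*(q+2*p)*((-p^2*q*c + rho*q*s)^2-((p+q)*(p^2*c^2+q^2*s^2))^2*c^2)+p*(p+2*q)*((-p*q^2*s - rho*p*c)^2-((p+q)*(p^2*c^2+q^2*s^2))^2*s^2)))/(2*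(q-p)*((p+q)*(p^2*c^2+q^2*s^2))^2)).
    + unfold cf, sf, Xcf, Xsf, Wf. field. repeat split; lra.
    + rewrite HE. unfold Rdiv. ring.
Qed.

Lemma rel_mu (a b p q c s c' s' : R) : p < q ->
  a^2*(q-p) = q*(q+2*p) -> b^2*(q-p) = p*(p+2*q) ->
  Nf c s c' s' * (p+q)^2 - (q-p) * Df a b c s c' s' = -2*(p*q + (p+q)*(p*c*c' + q*s*s')).
Proof.
  intros hpq hA hB. unfold Nf, Df.
  replace ((q-p)*(a^2*(1-c*c'+s*s') + b^2*(1+c*c'-s*s')))
    with ((a^2*(q-p))*(1-c*c'+s*s') + (b^2*(q-p))*(1+c*c'-s*s')) by ring.
  rewrite hA, hB. ring.
Qed.

Lemma rel_to_mu (a b p q c s c' s' : R) : 0 < b -> b < a -> 0 < p -> p < q ->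
  a^2*(q-p) = q*(q+2*p) -> b^2*(q-p) = p*(p+2*q) ->
  c^2+s^2=1 -> c'^2+s'^2=1 ->
  (p+q)*(p*c*c' + q*s*s') + p*q = 0 ->
  Nf c s c' s' / Df a b c s c' s' = (q-p)/(p+q)^2.
Proof.
  intros hb hab hp hpq hA hB h h' hr.
  pose proof (Df_pos a b c s c' s' hb hab h h').
  pose proof (rel_mu a b p q c s c' s' hpq hA hB) as E.
  assert (E' : Nf c s c' s' * (p+q)^2 = (q-p) * Df a b c s c' s') by lra.
  apply (Rmult_eq_reg_r (Df a b c s c' s' * (p+q)^2)).
  - field_simplify; [|lra|lra]. lra.
  - apply Rmult_integral_contrapositive_currified; [lra| apply pow_nonzero; lra].
Qed.

Lemma mu_to_rel (a b p q c s c' s' : R) : 0 < b -> b < a -> 0 < p -> p < q ->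
  a^2*(q-p) = q*(q+2*p) -> b^2*(q-p) = p*(p+2*q) ->
  c^2+s^2=1 -> c'^2+s'^2=1 ->
  Nf c s c' s' = (q-p)/(p+q)^2 * Df a b c s c' s' ->
  (p+q)*(p*c*c' + q*s*s') + p*q = 0.
Proof.
  intros hb hab hp hpq hA hB h h' hr.
  pose proof (rel_mu a b p q c s c' s' hpq hA hB) as E.
  rewrite hr in E. field_simplify in E; [|lra]. lra.
Qed.

Lemma fam_K (a b p q c s rho : R) : 0 < a -> 0 < b -> 0 < p -> p < q ->
  c^2+s^2=1 -> rho^2 = (p+q)^2*(p^2*c^2+q^2*s^2) - p^2*q^2 -> rho <> 0 ->
  (a * cf p q c s rho - a * c) * (b * sf p q c s (- rho) - b * s) -
  (b * sf p q c s rho - b * s) * (a * cf p q c s (- rho) - a * c) <> 0.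
Proof.
  intros ha hb hp hpq h hr hr0.
  pose proof (Wf_pos p q c s hp hpq h) as hW.
  assert (hp2 : 0 < p^2) by (apply pow_lt; lra).
  assert (hWn : p^2*c^2+q^2*s^2 <> 0) by (unfold Wf in hW; lra).
  pose proof (d0_pos p q s hp hpq) as hd0.
  assert (HK := polyK p q c s rho h hr).
  replace ((a * cf p q c s rho - a * c) * (b * sf p q c s (- rho) - b * s) -
           (b * sf p q c s rho - b * s) * (a * cf p q c s (- rho) - a * c))
    with (a*b*(((-p^2*q*c - rho*q*s)-((p+q)*(p^2*c^2+q^2*s^2))*c)*((-p*q^2*s - rho*p*c)-((p+q)*(p^2*c^2+q^2*s^2))*s)-((-p*q^2*s + rho*p*c)-((p+q)*(p^2*c^2+q^2*s^2))*s)*((-p^2*q*c + rho*q*s)-((p+q)*(p^2*c^2+q^2*s^2))*c))/(((p+q)*(p^2*c^2+q^2*s^2))^2)).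
  + replace (((-p^2*q*c - rho*q*s)-((p+q)*(p^2*c^2+q^2*s^2))*c)*((-p*q^2*s - rho*p*c)-((p+q)*(p^2*c^2+q^2*s^2))*s)-((-p*q^2*s + rho*p*c)-((p+q)*(p^2*c^2+q^2*s^2))*s)*((-p^2*q*c + rho*q*s)-((p+q)*(p^2*c^2+q^2*s^2))*c)) with (rho*(2*(q^2-p^2)^2*s^4+4*p*(p+q)^2*(q-p)*s^2+2*p^3*(p+2*q))) by lra.
    assert (hD1 : (p+q)*(p^2*c^2+q^2*s^2) <> 0) by (apply Rmult_integral_contrapositive_currified; lra).
    assert (hDD : ((p+q)*(p^2*c^2+q^2*s^2))^2 <> 0) by (apply pow_nonzero; exact hD1).
    intro Z. apply hr0.
    assert (Z2 : (a*b*(2*(q^2-p^2)^2*s^4+4*p*(p+q)^2*(q-p)*s^2+2*p^3*(p+2*q)))*rho = 0).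
    { replace ((a*b*(2*(q^2-p^2)^2*s^4+4*p*(p+q)^2*(q-p)*s^2+2*p^3*(p+2*q)))*rho) with ((a*b*(rho*(2*(q^2-p^2)^2*s^4+4*p*(p+q)^2*(q-p)*s^2+2*p^3*(p+2*q)))/(((p+q)*(p^2*c^2+q^2*s^2))^2))*(((p+q)*(p^2*c^2+q^2*s^2))^2)) by (field; split; [replace ((p*c)^2+(q*s)^2) with (p^2*c^2+q^2*s^2) by ring|]; lra).
      rewrite Z. ring. }
    apply Rmult_integral in Z2. destruct Z2 as [Z2|Z2]; [|exact Z2].
    exfalso. assert (0 < a*b*(2*(q^2-p^2)^2*s^4+4*p*(p+q)^2*(q-p)*s^2+2*p^3*(p+2*q))) by (apply Rmult_lt_0_compat; [apply Rmult_lt_0_compat|]; lra). lra.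
  + unfold cf, sf, Wf. field. split; lra.
Qed.

Lemma fam_unit (p q c s rho : R) : 0 < p -> p < q -> c^2+s^2=1 ->
  rho^2 = (p+q)^2*(p^2*c^2+q^2*s^2) - p^2*q^2 ->
  (cf p q c s rho)^2 + (sf p q c s rho)^2 = 1.
Proof.
  intros hp hpq h hr.
  pose proof (Wf_pos p q c s hp hpq h) as hW.
  assert (hp2 : 0 < p^2) by (apply pow_lt; lra).
  assert (hWn : p^2*c^2+q^2*s^2 <> 0) by (unfold Wf in hW; lra).
  pose proof (polyU2 p q c s rho h hr) as U.
  unfold cf, sf, Wf.
  apply (Rmult_eq_reg_r (((p+q)*(p^2*c^2+q^2*s^2))^2)).
  - field_simplify; [|split; [replace ((p*c)^2+(q*s)^2) with (p^2*c^2+q^2*s^2) by ring|]; lra].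
    lra.
  - apply pow_nonzero. apply Rmult_integral_contrapositive_currified; lra.
Qed.

Lemma fam_R12 (p q c s rho : R) : 0 < p -> p < q -> c^2+s^2=1 ->
  (p+q)*(p*c*cf p q c s rho + q*s*sf p q c s rho) + p*q = 0.
Proof.
  intros hp hpq h.
  pose proof (Wf_pos p q c s hp hpq h) as hW.
  assert (hp2 : 0 < p^2) by (apply pow_lt; lra).
  unfold cf, sf. unfold Wf in *. field.
  split; [replace ((p*c)^2+(q*s)^2) with (p^2*c^2+q^2*s^2) by ring|]; lra.
Qed.

Lemma fam_R23 (p q c s rho : R) : 0 < p -> p < q -> c^2+s^2=1 ->
  rho^2 = (p+q)^2*(p^2*c^2+q^2*s^2) - p^2*q^2 ->
  (p+q)*(p*cf p q c s rho*cf p q c s (-rho) + q*sf p q c s rho*sf p q c s (-rho)) + p*q = 0.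
Proof.
  intros hp hpq h hr.
  pose proof (Wf_pos p q c s hp hpq h) as hW.
  assert (hp2 : 0 < p^2) by (apply pow_lt; lra).
  assert (hWn : p^2*c^2+q^2*s^2 <> 0) by (unfold Wf in hW; lra).
  pose proof (polyR23 p q c s rho h hr) as U.
  unfold cf, sf, Wf.
  apply (Rmult_eq_reg_r (((p+q)*(p^2*c^2+q^2*s^2))^2)).
  - field_simplify; [|split; [replace ((p*c)^2+(q*s)^2) with (p^2*c^2+q^2*s^2) by ring|]; lra].
    lra.
  - apply pow_nonzero. apply Rmult_integral_contrapositive_currified; lra.
Qed.

Lemma nd_pairs (a b c1 s1 c2 s2 c3 s3 : R) :
  cross (a*c2-a*c1) (b*s2-b*s1) (a*c3-a*c1) (b*s3-b*s1) <> 0 ->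
  ~(c1=c2 /\ s1=s2) /\ ~(c1=c3 /\ s1=s3) /\ ~(c2=c3 /\ s2=s3).
Proof.
  intro H. unfold cross in H. repeat split; intros [e e']; apply H.
  - rewrite e, e'. ring.
  - rewrite e, e'. ring.
  - rewrite e, e'. ring.
Qed.

Lemma sym_rel (p q c s c' s' : R) :
  (p+q)*(p*c*c' + q*s*s') + p*q = 0 -> (p+q)*(p*c'*c + q*s'*s) + p*q = 0.
Proof. intro H. rewrite <- H. ring. Qed.

Lemma periodic_of_rel (a b p q c1 s1 c2 s2 c3 s3 : R) : 0 < b -> b < a -> 0 < p -> p < q ->
  a^2*(q-p) = q*(q+2*p) -> b^2*(q-p) = p*(p+2*q) ->
  c1^2+s1^2=1 -> c2^2+s2^2=1 -> c3^2+s3^2=1 ->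
  cross (a*c2-a*c1) (b*s2-b*s1) (a*c3-a*c1) (b*s3-b*s1) <> 0 ->
  (p+q)*(p*c1*c2 + q*s1*s2) + p*q = 0 ->
  (p+q)*(p*c1*c3 + q*s1*s3) + p*q = 0 ->
  (p+q)*(p*c2*c3 + q*s2*s3) + p*q = 0 ->
  periodic3 a b (a*c1,b*s1) (a*c2,b*s2) (a*c3,b*s3).
Proof.
  intros hb hab hp hpq hA hB h1 h2 h3 hK r12 r13 r23.
  destruct (nd_pairs _ _ _ _ _ _ _ _ hK) as [d12 [d13 d23]].
  assert (d21 : ~(c2=c1 /\ s2=s1)) by (intros [e e']; apply d12; split; auto).
  assert (d31 : ~(c3=c1 /\ s3=s1)) by (intros [e e']; apply d13; split; auto).
  assert (d32 : ~(c3=c2 /\ s3=s2)) by (intros [e e']; apply d23; split; auto).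
  pose proof (sym_rel _ _ _ _ _ _ r12) as r21.
  pose proof (sym_rel _ _ _ _ _ _ r13) as r31.
  pose proof (sym_rel _ _ _ _ _ _ r23) as r32.
  assert (ha : a <> 0) by lra. assert (hb0 : b <> 0) by lra.
  unfold periodic3. repeat split.
  - unfold nondegenerate. cbn [fst snd]. exact hK.
  - unfold on_ellipse; cbn [fst snd]. rewrite <- h1. field. split; assumption.
  - unfold on_ellipse; cbn [fst snd]. rewrite <- h2. field. split; assumption.
  - unfold on_ellipse; cbn [fst snd]. rewrite <- h3. field. split; assumption.
  - apply bis; try assumption.
    + apply Nf_pos; assumption.
    + apply Nf_pos; assumption.
    + rewrite (rel_to_mu a b p q c1 s1 c2 s2), (rel_to_mu a b p q c1 s1 c3 s3); auto.
  - apply bis; try assumption.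
    + apply Nf_pos; assumption.
    + apply Nf_pos; assumption.
    + rewrite (rel_to_mu a b p q c2 s2 c3 s3), (rel_to_mu a b p q c2 s2 c1 s1); auto.
    + intro Z. apply hK. rewrite <- Z. unfold cross. ring.
  - apply bis; try assumption.
    + apply Nf_pos; assumption.
    + apply Nf_pos; assumption.
    + rewrite (rel_to_mu a b p q c3 s3 c1 s1), (rel_to_mu a b p q c3 s3 c2 s2); auto.
    + intro Z. apply hK. rewrite <- Z. unfold cross. ring.
Qed.

Lemma fam_periodic (a b p q c s rho : R) : 0 < b -> b < a -> 0 < p -> p < q ->
  a^2*(q-p) = q*(q+2*p) -> b^2*(q-p) = p*(p+2*q) ->
  c^2+s^2=1 -> rho^2 = (p+q)^2*(p^2*c^2+q^2*s^2) - p^2*q^2 -> rho <> 0 ->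
  periodic3 a b (a*c,b*s) (a*cf p q c s rho, b*sf p q c s rho)
                      (a*cf p q c s (-rho), b*sf p q c s (-rho)).
Proof.
  intros hb hab hp hpq hA hB h hr hr0.
  assert (hr' : (-rho)^2 = (p+q)^2*(p^2*c^2+q^2*s^2) - p^2*q^2) by (rewrite <- hr; ring).
  apply (periodic_of_rel a b p q); auto.
  - apply fam_unit; auto.
  - apply fam_unit; auto.
  - unfold cross. apply fam_K; auto; lra.
  - apply fam_R12; auto.
  - apply fam_R12; auto.
  - apply fam_R23; auto.
Qed.

Lemma ellipseX (a b p q c s : R) : 0 < a -> 0 < b -> 0 < p -> p < q ->
  a^2*(q-p) = q*(q+2*p) -> b^2*(q-p) = p*(p+2*q) -> c^2+s^2=1 ->
  (a*Xcf p q c s)^2 / ((p^2+5*p*q+2*q^2)/(4*a*(p+q)))^2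
  + (b*Xsf p q c s)^2 / ((2*p^2+5*p*q+q^2)/(4*b*(p+q)))^2 = 1.
Proof.
  intros ha hb hp hpq hA hB h.
  pose proof (Wf_pos p q c s hp hpq h) as hW.
  assert (hp2 : 0 < p^2) by (apply pow_lt; lra).
  assert (hWn : Wf p q c s <> 0) by lra.
  assert (h5a : 0 < p^2+5*p*q+2*q^2) by (assert (0 < p*q) by (apply Rmult_lt_0_compat; lra); assert (0 < q^2) by (apply pow_lt; lra); lra).
  assert (h5b : 0 < 2*p^2+5*p*q+q^2) by (assert (0 < p*q) by (apply Rmult_lt_0_compat; lra); assert (0 < q^2) by (apply pow_lt; lra); lra).
  assert (hx : a*Xcf p q c s / ((p^2+5*p*q+2*q^2)/(4*a*(p+q)))
     = c*((q^2+2*p*q)*s^2 - p^2*c^2)/Wf p q c s).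
  { unfold Xcf.
    transitivity ((a^2*(q-p))*c*((q^2+2*p*q)*s^2 - p^2*c^2)/(q*(2*p+q)*Wf p q c s)).
    - field. repeat split; lra.
    - rewrite hA. field. repeat split; lra. }
  assert (hy : b*Xsf p q c s / ((2*p^2+5*p*q+q^2)/(4*b*(p+q)))
     = s*(q^2*s^2 - (p^2+2*p*q)*c^2)/Wf p q c s).
  { unfold Xsf.
    transitivity ((b^2*(q-p))*s*(q^2*s^2 - (p^2+2*p*q)*c^2)/(p*(p+2*q)*Wf p q c s)).
    - field. repeat split; lra.
    - rewrite hB. field. repeat split; lra. }
  replace ((a*Xcf p q c s)^2 / ((p^2+5*p*q+2*q^2)/(4*a*(p+q)))^2)
    with ((a*Xcf p q c s / ((p^2+5*p*q+2*q^2)/(4*a*(p+q))))^2) by (field; repeat split; lra).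
  replace ((b*Xsf p q c s)^2 / ((2*p^2+5*p*q+q^2)/(4*b*(p+q)))^2)
    with ((b*Xsf p q c s / ((2*p^2+5*p*q+q^2)/(4*b*(p+q))))^2) by (field; repeat split; lra).
  rewrite hx, hy.
  assert (E : c^2*((q^2+2*p*q)*s^2 - p^2*c^2)^2 + s^2*(q^2*s^2 - (p^2+2*p*q)*c^2)^2
              - (Wf p q c s)^2 = (c^2+s^2-1)*(Wf p q c s)^2) by (unfold Wf; ring).
  rewrite h in E.
  replace (1 - 1) with 0 in E by ring. rewrite Rmult_0_l in E.
  replace ((c*((q^2+2*p*q)*s^2 - p^2*c^2)/Wf p q c s)^2 + (s*(q^2*s^2 - (p^2+2*p*q)*c^2)/Wf p q c s)^2)
    with ((c^2*((q^2+2*p*q)*s^2 - p^2*c^2)^2 + s^2*(q^2*s^2 - (p^2+2*p*q)*c^2)^2)/(Wf p q c s)^2)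
    by (field; exact hWn).
  replace (c^2*((q^2+2*p*q)*s^2 - p^2*c^2)^2 + s^2*(q^2*s^2 - (p^2+2*p*q)*c^2)^2)
    with ((Wf p q c s)^2) by lra.
  field. exact hWn.
Qed.

Lemma mstar (a b p q m : R) : 0 < p -> p < q -> 0 < m ->
  a^2*(q-p) = q*(q+2*p) -> b^2*(q-p) = p*(p+2*q) ->
  3 - 2*m*(a^2+b^2) - m^2*(a^2-b^2)^2 = 0 ->
  m = (q-p)/(p+q)^2.
Proof.
  intros hp hpq hm hA hB hk.
  assert (hAmB : a^2 - b^2 = p+q).
  { apply (Rmult_eq_reg_r (q-p)); [|lra].
    replace ((a^2-b^2)*(q-p)) with (a^2*(q-p) - b^2*(q-p)) by ring.
    rewrite hA, hB. ring. }
  assert (E : (q-p)*(3 - 2*m*(a^2+b^2) - m^2*(a^2-b^2)^2)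
     = 3*(q-p) - 2*m*(a^2*(q-p)+b^2*(q-p)) - m^2*(a^2-b^2)^2*(q-p)) by ring.
  rewrite hk in E. rewrite hA, hB, hAmB in E.
  assert (E2 : ((p+q)^2*m - (q-p))*((q-p)*m+3) = 0).
  { rewrite <- (Rmult_0_r (q-p)) in E. lra. }
  apply Rmult_integral in E2. destruct E2 as [E2|E2].
  - assert (0 < (p+q)^2) by (apply pow_lt; lra).
    apply (Rmult_eq_reg_l ((p+q)^2)); [|lra]. field_simplify; lra.
  - assert (0 < (q-p)*m) by (apply Rmult_lt_0_compat; lra). lra.
Qed.

Lemma Nf_sym c s c' s' : Nf c s c' s' = Nf c' s' c s.
Proof. unfold Nf; ring. Qed.
Lemma Df_sym a b c s c' s' : Df a b c s c' s' = Df a b c' s' c s.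
Proof. unfold Df; ring. Qed.

Lemma rel_to_dot (p q c s c' s' : R) : p + q <> 0 ->
  (p+q)*(p*c*c' + q*s*s') + p*q = 0 -> (p*c)*c' + (q*s)*s' = -(p*q)/(p+q).
Proof.
  intros h0 h. apply (Rmult_eq_reg_l (p+q)); [|exact h0].
  replace ((p+q)*((p*c)*c' + (q*s)*s')) with ((p+q)*(p*c*c' + q*s*s')) by ring.
  field_simplify; [|exact h0]. lra.
Qed.

Lemma forward_core (a b p q c1 s1 c2 s2 c3 s3 : R) : 0 < b -> b < a -> 0 < p -> p < q ->
  a^2*(q-p) = q*(q+2*p) -> b^2*(q-p) = p*(p+2*q) ->
  c1^2+s1^2=1 -> c2^2+s2^2=1 -> c3^2+s3^2=1 ->
  periodic3 a b (a*c1,b*s1) (a*c2,b*s2) (a*c3,b*s3) ->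
  center h5 (a*c1,b*s1) (a*c2,b*s2) (a*c3,b*s3) = (a*Xcf p q c1 s1, b*Xsf p q c1 s1).
Proof.
  intros hb hab hp hpq hA hB h1 h2 h3 HP.
  assert (ha : 0 < a) by lra. assert (hpq0 : p + q <> 0) by lra.
  destruct HP as [Hnd [_ [_ [_ [nb1 [nb2 nb3]]]]]].
  unfold nondegenerate in Hnd; cbn [fst snd] in Hnd.
  destruct (nd_pairs _ _ _ _ _ _ _ _ Hnd) as [d12 [d13 d23]].
  assert (d21 : ~(c2=c1 /\ s2=s1)) by (intros [e e']; apply d12; split; auto).
  assert (d31 : ~(c3=c1 /\ s3=s1)) by (intros [e e']; apply d13; split; auto).
  assert (d32 : ~(c3=c2 /\ s3=s2)) by (intros [e e']; apply d23; split; auto).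
  pose proof (mu_eq a b c1 s1 c2 s2 c3 s3 hb hab h1 h2 h3
     (Nf_pos _ _ _ _ h1 h2 d12) (Nf_pos _ _ _ _ h1 h3 d13) nb1) as m1.
  pose proof (mu_eq a b c2 s2 c3 s3 c1 s1 hb hab h2 h3 h1
     (Nf_pos _ _ _ _ h2 h3 d23) (Nf_pos _ _ _ _ h2 h1 d21) nb2) as m2.
  rewrite (Nf_sym c2 s2 c1 s1), (Df_sym a b c2 s2 c1 s1) in m2.
  set (m := Nf c1 s1 c2 s2 / Df a b c1 s1 c2 s2) in *.
  pose proof (Df_pos a b c1 s1 c2 s2 hb hab h1 h2) as D12.
  pose proof (Df_pos a b c1 s1 c3 s3 hb hab h1 h3) as D13.
  pose proof (Df_pos a b c2 s2 c3 s3 hb hab h2 h3) as D23.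
  pose proof (Nf_pos _ _ _ _ h1 h2 d12) as N12.
  assert (hm : 0 < m) by (unfold m; apply Rdiv_lt_0_compat; lra).
  assert (e12 : Nf c1 s1 c2 s2 = m * Df a b c1 s1 c2 s2) by (unfold m; field; lra).
  assert (e13 : Nf c1 s1 c3 s3 = m * Df a b c1 s1 c3 s3) by (rewrite m1; field; lra).
  assert (e23 : Nf c2 s2 c3 s3 = m * Df a b c2 s2 c3 s3).
  { rewrite <- m2. field; lra. }
  assert (hb2 : 0 < b^2) by (apply pow_lt; lra).
  assert (hab2 : b^2 < a^2).
  { replace (a^2) with (a*a) by ring. replace (b^2) with (b*b) by ring.
    apply Rmult_le_0_lt_compat; lra. }
  assert (hk : 3 - 2*m*(a^2+b^2) - m^2*(a^2-b^2)^2 = 0).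
  { apply (closure c1 s1 c2 s2 c3 s3 m (a^2) (b^2) hb2 hab2 hm h1 h2 h3 d23).
    - rewrite <- (Rminus_diag_eq _ _ e12). unfold Nf, Df. ring.
    - rewrite <- (Rminus_diag_eq _ _ e13). unfold Nf, Df. ring.
    - rewrite <- (Rminus_diag_eq _ _ e23). unfold Nf, Df. ring. }
  pose proof (mstar a b p q m hp hpq hm hA hB hk) as hms.
  rewrite hms in e12, e13, e23.
  pose proof (mu_to_rel a b p q c1 s1 c2 s2 hb hab hp hpq hA hB h1 h2 e12) as r12.
  pose proof (mu_to_rel a b p q c1 s1 c3 s3 hb hab hp hpq hA hB h1 h3 e13) as r13.
  pose proof (rel_to_dot _ _ _ _ _ _ hpq0 r12) as q12.
  pose proof (rel_to_dot _ _ _ _ _ _ hpq0 r13) as q13.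
  pose proof (Wf_pos p q c1 s1 hp hpq h1) as hW. unfold Wf in hW.
  assert (hp2 : 0 < p^2) by (apply pow_lt; lra).
  assert (hnn : (p*c1)^2 + (q*s1)^2 <> 0).
  { replace ((p*c1)^2 + (q*s1)^2) with (p^2*c1^2+q^2*s1^2) by ring. lra. }
  destruct (decomp (p*c1) (q*s1) (-(p*q)/(p+q)) c2 s2 c3 s3 h2 h3 q12 q13 d23 hnn)
    as [ec2 [es2 [ec3 [es3 hr]]]].
  set (r := - (q*s1)*c2 + (p*c1)*s2) in *.
  assert (hrho : ((p+q)*r)^2 = (p+q)^2*(p^2*c1^2+q^2*s1^2) - p^2*q^2).
  { replace (((p+q)*r)^2) with ((p+q)^2*r^2) by ring. rewrite hr. field. exact hpq0. }
  assert (hrho0 : (p+q)*r <> 0).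
  { intro Z. assert (r = 0).
    { apply (Rmult_eq_reg_l (p+q)); [|exact hpq0]. rewrite Z. ring. }
    apply d23. rewrite ec2, es2, ec3, es3, H. split; field; split; assumption. }
  assert (fc2 : c2 = cf p q c1 s1 ((p+q)*r)).
  { rewrite ec2 at 1. unfold cf, Wf. field.
    split; assumption. }
  assert (fs2 : s2 = sf p q c1 s1 ((p+q)*r)).
  { rewrite es2 at 1. unfold sf, Wf. field.
    split; assumption. }
  assert (fc3 : c3 = cf p q c1 s1 (-((p+q)*r))).
  { rewrite ec3 at 1. unfold cf, Wf. field.
    split; assumption. }
  assert (fs3 : s3 = sf p q c1 s1 (-((p+q)*r))).
  { rewrite es3 at 1. unfold sf, Wf. field.
    split; assumption. }
  rewrite fc2, fs2, fc3, fs3.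
  apply (key a b p q c1 s1 ((p+q)*r)); assumption.
Qed.

From Coquelicot Require Import Coquelicot.

Definition cc (t:R) := (1-t^2)/(1+t^2).
Definition ss (t:R) := 2*t/(1+t^2).

Lemma one_t2 (t : R) : 1 + t^2 <> 0.
Proof. pose proof (pow2_ge_0 t). lra. Qed.

Lemma ccss (t : R) : (cc t)^2 + (ss t)^2 = 1.
Proof. unfold cc, ss. pose proof (one_t2 t). field. exact H. Qed.

Lemma cont_g (b p q y0 : R) : 0 < p -> p < q ->
  continuity (fun t => b * Xsf p q (cc t) (ss t) - y0).
Proof.
  intros hp hpq t.
  apply derivable_continuous_pt. apply ex_derive_Reals_0.
  pose proof (one_t2 t) as h1.
  assert (h1' : 1 + t*(t*1) <> 0) by (replace (t*(t*1)) with (t^2) by ring; exact h1).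
  pose proof (Wf_pos p q (cc t) (ss t) hp hpq (ccss t)) as hW.
  assert (hp2 : 0 < p^2) by (apply pow_lt; lra).
  assert (hK : 4*p*(p+2*q)*(p+q)*Wf p q (cc t) (ss t) <> 0).
  { apply Rmult_integral_contrapositive_currified; [|lra].
    apply Rmult_integral_contrapositive_currified; [|lra].
    apply Rmult_integral_contrapositive_currified; lra. }
  unfold Xsf, Wf, cc, ss.
  auto_derive.
  repeat split; try exact h1'.
  match goal with |- ?E <> 0 => replace E with (4*p*(p+2*q)*(p+q)*Wf p q (cc t) (ss t)) end.
  - exact hK.
  - unfold Wf, cc, ss. field. replace (t*t) with (t^2) by ring. exact h1.
Qed.

Lemma Xcf_negc p q c s : Wf p q c s <> 0 -> Xcf p q (-c) s = - Xcf p q c s.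
Proof.
  intro h. unfold Xcf. replace (Wf p q (-c) s) with (Wf p q c s) by (unfold Wf; ring).
  unfold Rdiv. ring.
Qed.
Lemma Xsf_negc p q c s : Xsf p q (-c) s = Xsf p q c s.
Proof.
  unfold Xsf. replace (Wf p q (-c) s) with (Wf p q c s) by (unfold Wf; ring).
  unfold Rdiv. ring.
Qed.
Lemma Xcf_negs p q c s : Xcf p q c (-s) = Xcf p q c s.
Proof.
  unfold Xcf. replace (Wf p q c (-s)) with (Wf p q c s) by (unfold Wf; ring).
  unfold Rdiv. ring.
Qed.
Lemma Xsf_negs p q c s : Xsf p q c (-s) = - Xsf p q c s.
Proof.
  unfold Xsf. replace (Wf p q c (-s)) with (Wf p q c s) by (unfold Wf; ring).
  unfold Rdiv. ring.
Qed.

Lemma surj (a b p q x y : R) : 0 < a -> 0 < b -> 0 < p -> p < q ->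
  a^2*(q-p) = q*(q+2*p) -> b^2*(q-p) = p*(p+2*q) ->
  x^2 / ((p^2+5*p*q+2*q^2)/(4*a*(p+q)))^2 + y^2 / ((2*p^2+5*p*q+q^2)/(4*b*(p+q)))^2 = 1 ->
  exists c s, c^2+s^2=1 /\ a*Xcf p q c s = x /\ b*Xsf p q c s = y.
Proof.
  intros ha hb hp hpq hA hB hxy.
  set (A5 := (p^2+5*p*q+2*q^2)/(4*a*(p+q))) in *.
  set (B5 := (2*p^2+5*p*q+q^2)/(4*b*(p+q))) in *.
  assert (hpq2 : 0 < p*q) by (apply Rmult_lt_0_compat; lra).
  assert (hq2 : 0 < q^2) by (apply pow_lt; lra).
  assert (hp2 : 0 < p^2) by (apply pow_lt; lra).
  assert (hA5 : 0 < A5) by (unfold A5; apply Rdiv_lt_0_compat; [lra|]; apply Rmult_lt_0_compat; lra).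
  assert (hB5 : 0 < B5) by (unfold B5; apply Rdiv_lt_0_compat; [lra|]; apply Rmult_lt_0_compat; lra).
  assert (hxA : 0 <= x^2/A5^2) by (apply Rdiv_le_0_compat; [apply pow2_ge_0| apply pow_lt; lra]).
  assert (hyB : y^2 <= B5^2).
  { assert (y^2/B5^2 <= 1) by lra.
    assert (0 < B5^2) by (apply pow_lt; lra).
    apply (Rmult_le_reg_r (/ B5^2)); [apply Rinv_0_lt_compat; lra|].
    rewrite Rinv_r; [|lra]. exact H. }
  set (y0 := Rabs y).
  assert (hy0 : 0 <= y0) by apply Rabs_pos.
  assert (hy0sq : y0^2 = y^2) by (unfold y0; apply pow2_abs).
  assert (hy0B : y0 <= B5).
  { destruct (Rle_dec y0 B5) as [l|l]; [exact l|].
    exfalso. assert (B5 < y0) by lra.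
    assert (B5*B5 < y0*y0) by (apply Rmult_le_0_lt_compat; lra).
    replace (y0*y0) with (y0^2) in H0 by ring. replace (B5*B5) with (B5^2) in H0 by ring. lra. }
  assert (ss0 : ss 0 = 0) by (unfold ss; field; lra).
  assert (ss1 : ss 1 = 1) by (unfold ss; field; lra).
  assert (cc1 : cc 1 = 0) by (unfold cc; field; lra).
  assert (g0 : b * Xsf p q (cc 0) (ss 0) - y0 = - y0).
  { rewrite ss0. unfold Xsf. unfold Rdiv. ring. }
  assert (g1 : b * Xsf p q (cc 1) (ss 1) - y0 = B5 - y0).
  { rewrite ss1, cc1. unfold Xsf, B5, Wf.
    transitivity ((b^2*(q-p))*(2*p^2+5*p*q+q^2)/(4*b*p*(p+2*q)*(p+q)) - y0).
    - field. repeat split; lra.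
    - rewrite hB. field. repeat split; lra. }
  destruct (IVT_cor (fun t => b * Xsf p q (cc t) (ss t) - y0) 0 1 (cont_g b p q y0 hp hpq))
    as [t [ht ht0]]; [lra| |].
  { cbv beta. rewrite g0, g1. assert (0 <= y0*(B5-y0)) by (apply Rmult_le_pos; lra). lra. }
  cbv beta in ht0.
  set (c0 := cc t) in *. set (s0 := ss t) in *.
  assert (hcs : c0^2+s0^2 = 1) by apply ccss.
  pose proof (ellipseX a b p q c0 s0 ha hb hp hpq hA hB hcs) as hE.
  fold A5 B5 in hE.
  assert (hbx : b*Xsf p q c0 s0 = y0) by lra.
  rewrite hbx, hy0sq in hE.
  assert (hxx : (a*Xcf p q c0 s0)^2 = x^2).
  { assert (E : (a*Xcf p q c0 s0)^2/A5^2 = x^2/A5^2) by lra.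
    apply (Rmult_eq_reg_r (/ A5^2)); [|apply Rinv_neq_0_compat; apply pow_nonzero; lra].
    exact E. }
  pose proof (Wf_pos p q c0 s0 hp hpq hcs) as hW.
  assert (hWn : Wf p q c0 s0 <> 0) by lra.
  assert (hWn' : Wf p q (-c0) s0 <> 0) by (unfold Wf in *; replace ((-c0)^2) with (c0^2) by ring; exact hWn).
  assert (hsq : (a*Xcf p q c0 s0 - x)*(a*Xcf p q c0 s0 + x) = 0) by (rewrite <- (Rminus_diag_eq _ _ hxx); ring).
  apply Rmult_integral in hsq.
  destruct (Rle_dec 0 y) as [hyp|hyn].
  - assert (ey : y0 = y) by (unfold y0; apply Rabs_pos_eq; exact hyp).
    destruct hsq as [ex|ex].
    + exists c0, s0. repeat split; [exact hcs|lra|lra].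
    + exists (-c0), s0. repeat split.
      * rewrite <- hcs. ring.
      * rewrite Xcf_negc by exact hWn. lra.
      * rewrite Xsf_negc. lra.
  - assert (ey : y0 = - y) by (unfold y0; apply Rabs_left; lra).
    destruct hsq as [ex|ex].
    + exists c0, (-s0). repeat split.
      * rewrite <- hcs. ring.
      * rewrite Xcf_negs. lra.
      * rewrite Xsf_negs. lra.
    + exists (-c0), (-s0). repeat split.
      * rewrite <- hcs. ring.
      * rewrite Xcf_negs, Xcf_negc by exact hWn. lra.
      * rewrite Xsf_negs, Xsf_negc. lra.
Qed.

Lemma forward (a b p q : R) (P1 P2 P3 : pt) : 0 < b -> b < a -> 0 < p -> p < q ->
  a^2*(q-p) = q*(q+2*p) -> b^2*(q-p) = p*(p+2*q) ->
  periodic3 a b P1 P2 P3 ->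
  exists c s, c^2+s^2 = 1 /\ center h5 P1 P2 P3 = (a*Xcf p q c s, b*Xsf p q c s).
Proof.
  intros hb hab hp hpq hA hB HP.
  destruct P1 as [x1 y1]. destruct P2 as [x2 y2]. destruct P3 as [x3 y3].
  assert (ha : a <> 0) by lra. assert (hb0 : b <> 0) by lra.
  assert (E1 : (x1,y1) = (a*(x1/a), b*(y1/b))) by (f_equal; field; assumption).
  assert (E2 : (x2,y2) = (a*(x2/a), b*(y2/b))) by (f_equal; field; assumption).
  assert (E3 : (x3,y3) = (a*(x3/a), b*(y3/b))) by (f_equal; field; assumption).
  assert (U : forall x y, on_ellipse a b (x,y) -> (x/a)^2 + (y/b)^2 = 1).
  { intros x y h. unfold on_ellipse in h; cbn [fst snd] in h. rewrite <- h. field. split; assumption. }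
  assert (HP' := HP). destruct HP' as [H0 [H1 [H2 [H3 _]]]].
  pose proof (U _ _ H1) as u1. pose proof (U _ _ H2) as u2. pose proof (U _ _ H3) as u3.
  exists (x1/a), (y1/b). split; [exact u1|].
  rewrite E1, E2, E3. rewrite E1, E2, E3 in HP.
  apply forward_core; assumption.
Qed.

Lemma sq_lt_imp (u v : R) : 0 <= u -> 0 <= v -> u^2 < v^2 -> u < v.
Proof.
  intros hu hv h. destruct (Rlt_dec u v) as [l|l]; [exact l|].
  exfalso. assert (v <= u) by lra. assert (v^2 <= u^2) by (apply pow_incr; lra). lra.
Qed.

Theorem theorem1 (a b : R) (hb : 0 < b) (hab : b < a) :
  forall x y : R,
    locus a b h5 (x, y) <-> x^2 / (a5 a b)^2 + y^2 / (b5 a b)^2 = 1.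
Proof.
  intros x y.
  assert (ha : 0 < a) by lra.
  assert (ha2 : 0 < a^2) by (apply pow_lt; lra).
  assert (hb2 : 0 < b^2) by (apply pow_lt; lra).
  assert (hab2 : b^2 < a^2).
  { replace (a^2) with (a*a) by ring. replace (b^2) with (b*b) by ring.
    apply Rmult_le_0_lt_compat; lra. }
  assert (harg : 0 < a^4 - a^2*b^2 + b^4).
  { replace (a^4 - a^2*b^2 + b^4) with ((a^2-b^2)^2 + a^2*b^2) by ring.
    assert (0 <= (a^2-b^2)^2) by apply pow2_ge_0.
    assert (0 < a^2*b^2) by (apply Rmult_lt_0_compat; lra). lra. }
  set (dl := delta a b).
  assert (hdl2 : dl^2 = a^4 - a^2*b^2 + b^4) by (unfold dl, delta; apply pow2_sqrt; lra).
  assert (hdl0 : 0 <= dl) by (unfold dl, delta; apply sqrt_pos).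
  set (p := a^2 - dl). set (q := dl - b^2).
  assert (hp : 0 < p).
  { unfold p. assert (dl < a^2).
    { apply sq_lt_imp; [exact hdl0|lra|]. rewrite hdl2.
      replace ((a^2)^2) with (a^4) by ring.
      assert (0 < b^2*(a^2-b^2)) by (apply Rmult_lt_0_compat; lra).
      replace (a^4 - a^2*b^2 + b^4) with (a^4 - b^2*(a^2-b^2)) by ring. lra. }
    lra. }
  assert (hpq : p < q).
  { unfold p, q. assert (a^2+b^2 < 2*dl).
    { apply sq_lt_imp; [lra|lra|].
      replace ((2*dl)^2) with (4*dl^2) by ring. rewrite hdl2.
      assert (0 < (a^2-b^2)^2) by (apply pow_lt; lra).
      replace (4*(a^4 - a^2*b^2 + b^4)) with ((a^2+b^2)^2 + 3*(a^2-b^2)^2) by ring. lra. }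
    lra. }
  assert (hA : a^2*(q-p) = q*(q+2*p)).
  { assert (E : a^2*(q-p) - q*(q+2*p) = dl^2 - (a^4 - a^2*b^2 + b^4)) by (unfold p, q; ring).
    rewrite hdl2 in E. lra. }
  assert (hB : b^2*(q-p) = p*(p+2*q)).
  { assert (E : b^2*(q-p) - p*(p+2*q) = dl^2 - (a^4 - a^2*b^2 + b^4)) by (unfold p, q; ring).
    rewrite hdl2 in E. lra. }
  assert (hpq_ab : p + q = a^2 - b^2) by (unfold p, q; ring).
  assert (Ea5 : a5 a b = (p^2+5*p*q+2*q^2)/(4*a*(p+q))).
  { unfold a5, w5', w5'', w5. change (delta a b) with dl.
    assert (E : (- (a^2*(a^2+3*b^2)) + (3*a^2+b^2)*dl) - (p^2+5*p*q+2*q^2)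
                = 2*(dl^2 - (a^4 - a^2*b^2 + b^4))) by (unfold p, q; ring).
    rewrite hdl2 in E.
    rewrite hpq_ab.
    replace (- (a^2*(a^2+3*b^2)) + (3*a^2+b^2)*dl) with (p^2+5*p*q+2*q^2) by lra.
    ring. }
  assert (Eb5 : b5 a b = (2*p^2+5*p*q+q^2)/(4*b*(p+q))).
  { unfold b5, w5', w5'', w5. change (delta a b) with dl.
    assert (E : (b^2*(b^2+3*a^2) - (3*b^2+a^2)*dl) + (2*p^2+5*p*q+q^2)
                = -2*(dl^2 - (a^4 - a^2*b^2 + b^4))) by (unfold p, q; ring).
    rewrite hdl2 in E.
    rewrite hpq_ab.
    replace (b^2*(b^2+3*a^2) - (3*b^2+a^2)*dl) with (-(2*p^2+5*p*q+q^2)) by lra.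
    field. split; lra. }
  rewrite Ea5, Eb5.
  clearbody p q dl.
  split.
  - intros [P1 [P2 [P3 [HP Hc]]]].
    destruct (forward a b p q P1 P2 P3 hb hab hp hpq hA hB HP) as [c [s [hcs Hc']]].
    rewrite Hc' in Hc. injection Hc as ex ey.
    rewrite <- ex, <- ey.
    apply ellipseX; assumption.
  - intro H.
    destruct (surj a b p q x y ha hb hp hpq hA hB H) as [c [s [hcs [ex ey]]]].
    pose proof (Wf_pos p q c s hp hpq hcs) as hW. unfold Wf in hW.
    assert (hpos : 0 < (p+q)^2*(p^2*c^2+q^2*s^2) - p^2*q^2).
    { assert (hp2 : 0 < p^2) by (apply pow_lt; lra).
      assert ((p+q)^2*p^2 <= (p+q)^2*(p^2*c^2+q^2*s^2))
        by (apply Rmult_le_compat_l; [apply pow2_ge_0|exact hW]).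
      assert (0 < (p+q)^2*p^2 - p^2*q^2).
      { replace ((p+q)^2*p^2 - p^2*q^2) with (p^2*(p*(p+2*q))) by ring.
        apply Rmult_lt_0_compat; [lra|]. apply Rmult_lt_0_compat; lra. }
      lra. }
    set (rho := sqrt ((p+q)^2*(p^2*c^2+q^2*s^2) - p^2*q^2)).
    assert (hr : rho^2 = (p+q)^2*(p^2*c^2+q^2*s^2) - p^2*q^2) by (unfold rho; apply pow2_sqrt; lra).
    assert (hr0 : rho <> 0) by (unfold rho; apply Rgt_not_eq; apply sqrt_lt_R0; lra).
    exists (a*c, b*s), (a*cf p q c s rho, b*sf p q c s rho),
           (a*cf p q c s (-rho), b*sf p q c s (-rho)).
    split.
    + apply fam_periodic; assumption.
    + rewrite key by assumption. rewrite ex, ey. reflexivity.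
Qed.
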